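(* Let $r>0$ and let $L$ range over those integers for which $N=rL$ is an integer. Let $\nu_L$ be the (unique) stationary distribution of the RBB process with $L$ bins and $N=rL$ balls, and let $\eta^L\sim\nu_L$. Assume that $(\nu_L)$ is chaotic, i.e. there is a probability measure $\mu$ on $\mathbb{Z}_+$ such that for every $n\in\mathbb{N}$ the law of $(\eta^L_1,\dots,\eta^L_n)$ converges weakly to $\mu^{\otimes n}$ as $L\to\infty$. Then $\mu=\pi_{\rho_r}$, where $\rho_r=1+r-\sqrt{1+r^2}$.
   Context: RBB process with $L$ bins: Markov chain on $\mathbb{Z}_+^L$; with $w(\eta):=(\mathbf{1}(\eta_1>0),\dots,\mathbf{1}(\eta_L>0))$ and $K(\eta):=\sum_j\mathbf{1}(\eta_j>0)$, from state $\eta$ the next state is $\eta-w(\eta)+B(\eta)$ where $B(\eta)$ is multinomial with $K(\eta)$ trials and cell probabilities $(1/L,\dots,1/L)$. It conserves the total number of balls and, restricted to configurations with $N$ balls, is an ergodic finite Markov chain. The M/D/1 queue with arrival rate $\rho\ge0$ is the Markov chain on $\mathbb{Z}_+$ given by $\zeta(t+1):=\zeta(t)-\mathbf{1}(\zeta(t)>0)+M_{t+1}$ with $(M_t)_{t\ge1}$ i.i.d. Poisson of mean $\rho$; for $\rho\in[0,1)$, $\pi_\rho$ denotes its invariant probability measure. *)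

(* Defs.v *)
From Stdlib Require Import Reals Lra Lia Arith List Bool.
Import ListNotations.
Open Scope R_scope.

Definition ind_pos (x : nat) : nat := if Nat.eqb x 0 then 0%nat else 1%nat.

Definition nsum (l : list nat) : nat := fold_right Nat.add 0%nat l.
Definition Rsum_list (l : list R) : R := fold_right Rplus 0 l.
Definition Rprod_list (l : list R) : R := fold_right Rmult 1 l.

Definition Kocc (eta : list nat) : nat := nsum (map ind_pos eta).

Fixpoint configs (L N : nat) : list (list nat) :=
  match L with
  | O => if Nat.eqb N 0 then [[]] else []
  | S L' => flat_map (fun k => map (cons k) (configs L' (N - k))) (seq 0 (S N))
  end.

(** One-step transition probability of the RBB process with L bins:
    eta' = eta - w(eta) + B, with B ~ Multinomial(K(eta); 1/L,...,1/L).
    B_j = eta'_j + w_j - eta_j must be >= 0; its multinomial probability is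
    K!/(prod_j B_j!) * (1/L)^K. *)
Definition rbb_trans (L : nat) (eta eta' : list nat) : R :=
  let pairs := combine eta eta' in
  let K := Kocc eta in
  if (forallb (fun p => Nat.leb (fst p) (snd p + ind_pos (fst p))) pairs
     && Nat.eqb (nsum eta) (nsum eta'))%bool
  then
    let bs := map (fun p => (snd p + ind_pos (fst p) - fst p)%nat) pairs in
    INR (fact K) / Rprod_list (map (fun b => INR (fact b)) bs) * (/ INR L) ^ K
  else 0.

Definition rbb_stationary (L N : nat) (nu : list nat -> R) : Prop :=
  (forall eta, In eta (configs L N) -> 0 <= nu eta) /\
  Rsum_list (map nu (configs L N)) = 1 /\
  (forall eta', In eta' (configs L N) ->
     nu eta' = Rsum_list (map (fun eta => nu eta * rbb_trans L eta eta') (configs L N))).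

Definition marginal (L N : nat) (nu : list nat -> R) (k : list nat) : R :=
  Rsum_list (map nu (filter (fun eta => if list_eq_dec Nat.eq_dec (firstn (length k) eta) k
                                        then true else false) (configs L N))).

Definition prod_measure (mu : nat -> R) (k : list nat) : R := Rprod_list (map mu k).

Definition prob_measure_nat (mu : nat -> R) : Prop :=
  (forall j, 0 <= mu j) /\ infinite_sum mu 1.

Definition poisson (rho : R) (k : nat) : R := exp (- rho) * rho ^ k / INR (fact k).

(** pi is an invariant probability measure of the M/D/1 queue with arrival rate rho:
    zeta(t+1) = zeta(t) - 1(zeta(t)>0) + M, M ~ Poisson(rho). From state i one can reach
    j only if i <= j+1, with probability poisson rho (j + 1(i>0) - i). *)
Definition md1_invariant (rho : R) (pi : nat -> R) : Prop :=
  prob_measure_nat pi /\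
  (forall j : nat,
     pi j = sum_f_R0 (fun i => pi i * poisson rho (j + ind_pos i - i)%nat) (S j)).

Definition rho_of (r : R) : R := 1 + r - sqrt (1 + r ^ 2).

(* Main.v *)
Require Import Defs.
From Stdlib Require Import Reals Lra Lia Arith List Bool Permutation ZArith.
Import ListNotations.
Open Scope R_scope.

Definition SS {A} (f : A -> R) (l : list A) : R := Rsum_list (map f l).

Lemma SS_nil {A} (f : A -> R) : SS f [] = 0.
Proof. reflexivity. Qed.
Lemma SS_cons {A} (f : A -> R) a l : SS f (a :: l) = f a + SS f l.
Proof. reflexivity. Qed.
Lemma SS_app {A} (f : A -> R) l1 l2 : SS f (l1 ++ l2) = SS f l1 + SS f l2.
Proof. induction l1; unfold SS in *; simpl; [lra|]. rewrite IHl1; lra. Qed.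
Lemma SS_map {A B} (f : B -> R) (g : A -> B) l : SS f (map g l) = SS (fun x => f (g x)) l.
Proof. unfold SS; now rewrite map_map. Qed.
Lemma SS_flat_map {A B} (f : B -> R) (g : A -> list B) l :
  SS f (flat_map g l) = SS (fun x => SS f (g x)) l.
Proof. induction l; simpl; [reflexivity|]. rewrite SS_app, SS_cons, IHl; reflexivity. Qed.
Lemma SS_ext {A} (f g : A -> R) l : (forall x, In x l -> f x = g x) -> SS f l = SS g l.
Proof. induction l; intros H; [reflexivity|]. rewrite !SS_cons, H, IHl; simpl; auto.
  intros; apply H; simpl; auto. Qed.
Lemma SS_plus {A} (f g : A -> R) l : SS (fun x => f x + g x) l = SS f l + SS g l.
Proof. induction l; [simpl; unfold SS; simpl; lra|]. rewrite !SS_cons, IHl; lra. Qed.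
Lemma SS_minus {A} (f g : A -> R) l : SS (fun x => f x - g x) l = SS f l - SS g l.
Proof. induction l; [simpl; unfold SS; simpl; lra|]. rewrite !SS_cons, IHl; lra. Qed.
Lemma SS_scal {A} c (f : A -> R) l : SS (fun x => c * f x) l = c * SS f l.
Proof. induction l; [unfold SS; simpl; lra|]. rewrite !SS_cons, IHl; lra. Qed.
Lemma SS_scal_r {A} c (f : A -> R) l : SS (fun x => f x * c) l = SS f l * c.
Proof. induction l; [unfold SS; simpl; lra|]. rewrite !SS_cons, IHl; lra. Qed.
Lemma SS_zero {A} (l : list A) : SS (fun _ => 0) l = 0.
Proof. induction l; [reflexivity|]. rewrite SS_cons, IHl; lra. Qed.
Lemma SS_const {A} c (l : list A) : SS (fun _ => c) l = INR (length l) * c.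
Proof. induction l; [unfold SS; simpl; lra|]. rewrite SS_cons, IHl. simpl length.
  rewrite S_INR; lra. Qed.
Lemma SS_nonneg {A} (f : A -> R) l : (forall x, In x l -> 0 <= f x) -> 0 <= SS f l.
Proof. induction l; intros H; [unfold SS; simpl; lra|]. rewrite SS_cons.
  assert (0 <= f a) by (apply H; simpl; auto). assert (0 <= SS f l) by (apply IHl; intros; apply H; simpl; auto). lra. Qed.
Lemma SS_le {A} (f g : A -> R) l : (forall x, In x l -> f x <= g x) -> SS f l <= SS g l.
Proof. induction l; intros H; [unfold SS; simpl; lra|]. rewrite !SS_cons.
  assert (f a <= g a) by (apply H; simpl; auto). assert (SS f l <= SS g l) by (apply IHl; intros; apply H; simpl; auto). lra. Qed.
Lemma SS_abs {A} (f : A -> R) l : Rabs (SS f l) <= SS (fun x => Rabs (f x)) l.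
Proof. induction l; [unfold SS; simpl; rewrite Rabs_R0; lra|]. rewrite !SS_cons.
  eapply Rle_trans; [apply Rabs_triang|]. lra. Qed.
Lemma SS_swap {A B} (f : A -> B -> R) l1 l2 :
  SS (fun x => SS (fun y => f x y) l2) l1 = SS (fun y => SS (fun x => f x y) l1) l2.
Proof. induction l1.
  - unfold SS at 1; simpl. symmetry. apply SS_zero.
  - rewrite SS_cons, IHl1. rewrite <- SS_plus. apply SS_ext. intros; rewrite SS_cons; lra. Qed.
Lemma SS_perm {A} (f : A -> R) l1 l2 : Permutation l1 l2 -> SS f l1 = SS f l2.
Proof. induction 1; unfold SS in *; simpl; try lra. Qed.
Lemma SS_in_le {A} (f : A -> R) l x : (forall y, In y l -> 0 <= f y) -> In x l -> f x <= SS f l.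
Proof. induction l; intros H Hx; [destruct Hx|]. rewrite SS_cons. destruct Hx as [<-|Hx].
  - assert (0 <= SS f l) by (apply SS_nonneg; intros; apply H; simpl; auto). lra.
  - assert (f x <= SS f l) by (apply IHl; auto; intros; apply H; simpl; auto).
    assert (0 <= f a) by (apply H; simpl; auto). lra. Qed.
Lemma SS_zero_nonneg {A} (f : A -> R) l : (forall y, In y l -> 0 <= f y) -> SS f l = 0 ->
  forall x, In x l -> f x = 0.
Proof. intros H H0 x Hx. assert (f x <= SS f l) by (apply SS_in_le; auto).
  assert (0 <= f x) by auto. lra. Qed.
Lemma SS_filter {A} (f : A -> R) (p : A -> bool) l :
  SS f (filter p l) = SS (fun x => if p x then f x else 0) l.
Proof. induction l; [reflexivity|]. rewrite SS_cons. cbn [filter]. destruct (p a); rewrite ?SS_cons, IHl; lra. Qed.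
Lemma SS_seq_shift f a n : SS f (seq (S a) n) = SS (fun i => f (S i)) (seq a n).
Proof. rewrite <- seq_shift. apply SS_map. Qed.
Lemma SS_seq_last f a n : SS f (seq a (S n)) = SS f (seq a n) + f (a + n)%nat.
Proof. rewrite seq_S, SS_app. rewrite SS_cons, SS_nil. lra. Qed.
Lemma SS_seq_sum f n : SS f (seq 0 (S n)) = sum_f_R0 f n.
Proof. induction n; [unfold SS; simpl; lra|]. rewrite SS_seq_last, IHn. simpl. reflexivity. Qed.

Lemma nsum_cons a l : nsum (a :: l) = (a + nsum l)%nat.
Proof. reflexivity. Qed.

Lemma configs_In L : forall N eta, In eta (configs L N) <-> (length eta = L /\ nsum eta = N).
Proof.
  induction L; intros N eta; cbn [configs].
  - destruct (Nat.eqb_spec N 0); simpl; split.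
    + intros [<-|[]]; subst; auto.
    + intros [H1 H2]; destruct eta; [subst; auto| discriminate].
    + intros [].
    + intros [H1 H2]; destruct eta; [simpl in H2; lia | discriminate].
  - rewrite in_flat_map. split.
    + intros [k [Hk Hin]]. apply in_map_iff in Hin. destruct Hin as [e [<- He]].
      apply IHL in He. apply in_seq in Hk. destruct He. simpl. split; [lia|]. lia.
    + intros [H1 H2]. destruct eta as [|k e]; [discriminate|]. exists k. split.
      * apply in_seq. simpl in H2. lia.
      * apply in_map. apply IHL. simpl in *. split; lia.
Qed.

Lemma NoDup_fm_cons (g : nat -> list (list nat)) l :
  NoDup l -> (forall k, NoDup (g k)) -> NoDup (flat_map (fun k => map (cons k) (g k)) l).
Proof.
  induction l as [|a l IH]; intros Hl Hg; simpl; [constructor|].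
  inversion Hl; subst. apply NoDup_app.
  - apply NoDup_map_NoDup_ForallPairs; auto. intros x y _ _ H; now inversion H.
  - apply IH; auto.
  - intros x Hx Hx'. apply in_map_iff in Hx. destruct Hx as [e [<- _]].
    apply in_flat_map in Hx'. destruct Hx' as [k [Hk Hk']]. apply in_map_iff in Hk'.
    destruct Hk' as [e' [He' _]]. inversion He'; subst. contradiction.
Qed.

Lemma configs_NoDup L : forall N, NoDup (configs L N).
Proof.
  induction L; intros N; cbn [configs].
  - destruct (N =? 0)%nat; repeat constructor; auto.
  - apply NoDup_fm_cons; auto. apply seq_NoDup.
Qed.

Lemma configs_perm L N (f : list nat -> list nat) :
  (forall x, In x (configs L N) -> In (f x) (configs L N)) ->
  (forall x y, In x (configs L N) -> In y (configs L N) -> f x = f y -> x = y) ->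
  Permutation (map f (configs L N)) (configs L N).
Proof.
  intros H1 H2. apply Permutation_map_same_l.
  - apply NoDup_map_NoDup_ForallPairs; [|apply configs_NoDup].
    intros x y Hx Hy. apply H2; auto.
  - intros y Hy. apply in_map_iff in Hy. destruct Hy as [x [<- Hx]]. auto.
Qed.

Lemma SS_configs_reindex L N (f : list nat -> list nat) (g : list nat -> R) :
  (forall x, In x (configs L N) -> In (f x) (configs L N)) ->
  (forall x y, In x (configs L N) -> In y (configs L N) -> f x = f y -> x = y) ->
  SS (fun x => g (f x)) (configs L N) = SS g (configs L N).
Proof.
  intros H1 H2. rewrite <- SS_map. apply SS_perm. apply configs_perm; auto.
Qed.

Definition tr (i j k : nat) : nat := if Nat.eqb k i then j else if Nat.eqb k j then i else k.
Definition swp {A} (d : A) (i j : nat) (l : list A) : list A :=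
  map (fun k => nth (tr i j k) l d) (seq 0 (length l)).

Lemma tr_lt i j k n : (i < n)%nat -> (j < n)%nat -> (k < n)%nat -> (tr i j k < n)%nat.
Proof. unfold tr; intros; destruct (Nat.eqb_spec k i); destruct (Nat.eqb_spec k j); lia. Qed.
Lemma tr_tr i j k : tr i j (tr i j k) = k.
Proof. unfold tr. destruct (Nat.eqb_spec k i) as [->|H1].
  - rewrite Nat.eqb_refl. destruct (Nat.eqb_spec j i); auto; rewrite ?Nat.eqb_refl; auto.
  - destruct (Nat.eqb_spec k j) as [->|H2].
    + rewrite Nat.eqb_refl. auto.
    + destruct (Nat.eqb_spec k i); [lia|]. destruct (Nat.eqb_spec k j); [lia|]. auto. Qed.

Lemma nth_map_lt {A B} (f : A -> B) l k d d0 : (k < length l)%nat -> nth k (map f l) d = f (nth k l d0).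
Proof. intros H. rewrite (nth_indep _ d (f d0)) by (rewrite length_map; auto). apply map_nth. Qed.

Lemma swp_length {A} (d : A) i j l : length (swp d i j l) = length l.
Proof. unfold swp. now rewrite length_map, length_seq. Qed.
Lemma swp_nth {A} (d : A) i j l k : (k < length l)%nat -> nth k (swp d i j l) d = nth (tr i j k) l d.
Proof. intros Hk. unfold swp. rewrite (nth_map_lt _ _ _ _ 0%nat) by (rewrite length_seq; auto).
  rewrite seq_nth; auto. Qed.

Lemma swp_swp {A} (d : A) i j l : (i < length l)%nat -> (j < length l)%nat -> swp d i j (swp d i j l) = l.
Proof. intros Hi Hj. apply nth_ext with d d; rewrite ?swp_length; auto.
  intros k Hk. rewrite swp_nth by (rewrite swp_length; auto). rewrite swp_nth by (apply tr_lt; auto).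
  now rewrite tr_tr. Qed.

Lemma swp_map {A B} (d : A) (d' : B) (f : A -> B) i j l : (i < length l)%nat -> (j < length l)%nat ->
  map f (swp d i j l) = swp d' i j (map f l).
Proof. intros Hi Hj. apply nth_ext with d' d'; rewrite ?length_map, ?swp_length, ?length_map; auto.
  intros k Hk. rewrite swp_nth by (rewrite length_map; auto).
  rewrite (nth_indep _ d' (f d)) by (rewrite length_map, swp_length; auto). rewrite map_nth.
  rewrite swp_nth by auto.
  rewrite (nth_indep _ d' (f d)) by (rewrite length_map; apply tr_lt; auto). rewrite map_nth. auto. Qed.

Lemma swp_combine {A B} (a : A) (b : B) i j l l' : length l = length l' -> (i < length l)%nat -> (j < length l)%nat ->
  combine (swp a i j l) (swp b i j l') = swp (a, b) i j (combine l l').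
Proof. intros Hl Hi Hj. apply nth_ext with (a,b) (a,b).
  - rewrite !length_combine, !swp_length, length_combine. auto.
  - intros k Hk. rewrite length_combine, !swp_length in Hk.
    rewrite combine_nth by (rewrite !swp_length; auto).
    rewrite !swp_nth by (rewrite ?length_combine; lia).
    rewrite combine_nth by auto. auto. Qed.

Lemma swp_perm {A} (d : A) i j l : (i < length l)%nat -> (j < length l)%nat -> Permutation (swp d i j l) l.
Proof. intros Hi Hj.
  assert (E : l = map (fun k => nth k l d) (seq 0 (length l))).
  { apply nth_ext with d d; rewrite ?length_map, ?length_seq; auto. intros k Hk.
    rewrite (nth_map_lt _ _ _ _ 0%nat) by (rewrite length_seq; auto).
    rewrite seq_nth; auto. }
  unfold swp. transitivity (map (fun k => nth k l d) (seq 0 (length l))); [|rewrite <- E; reflexivity]. replace (map (fun k => nth (tr i j k) l d) (seq 0 (length l)))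
    with (map (fun k => nth k l d) (map (tr i j) (seq 0 (length l)))) by (now rewrite map_map).
  apply Permutation_map. apply Permutation_map_same_l.
  - apply NoDup_map_NoDup_ForallPairs; [|apply seq_NoDup]. intros x y _ _ H.
    rewrite <- (tr_tr i j x), <- (tr_tr i j y). now rewrite H.
  - intros y Hy. apply in_map_iff in Hy. destruct Hy as [x [<- Hx]]. apply in_seq in Hx.
    apply in_seq. split; [lia|]. simpl. apply tr_lt; lia. Qed.

Lemma nsum_perm l l' : Permutation l l' -> nsum l = nsum l'.
Proof. induction 1; simpl in *; lia. Qed.
Lemma Rprod_perm l l' : Permutation l l' -> Rprod_list l = Rprod_list l'.
Proof. induction 1; unfold Rprod_list in *; simpl; [reflexivity|rewrite IHPermutation; reflexivity|ring|congruence]. Qed.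
Lemma forallb_perm {A} (f : A -> bool) l l' : Permutation l l' -> forallb f l = forallb f l'.
Proof. induction 1; simpl; [reflexivity|rewrite IHPermutation; reflexivity| |congruence].
  destruct (f x), (f y); reflexivity. Qed.

Lemma trans_swp L eta eta' i j : length eta = L -> length eta' = L -> (i < L)%nat -> (j < L)%nat ->
  rbb_trans L (swp 0%nat i j eta) (swp 0%nat i j eta') = rbb_trans L eta eta'.
Proof. intros H1 H2 Hi Hj. unfold rbb_trans.
  rewrite swp_combine by lia.
  assert (P : Permutation (swp (0%nat, 0%nat) i j (combine eta eta')) (combine eta eta')).
  { apply swp_perm; rewrite length_combine; lia. }
  rewrite (forallb_perm _ _ _ P).
  rewrite (nsum_perm (swp 0%nat i j eta) eta) by (apply swp_perm; lia).
  rewrite (nsum_perm (swp 0%nat i j eta') eta') by (apply swp_perm; lia).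
  unfold Kocc. rewrite (nsum_perm (map ind_pos (swp 0%nat i j eta)) (map ind_pos eta))
    by (apply Permutation_map, swp_perm; lia).
  rewrite (Rprod_perm (map _ (map _ (swp _ i j _))) (map (fun b => INR (fact b)) (map (fun p => (snd p + ind_pos (fst p) - fst p)%nat) (combine eta eta')))).
  - reflexivity.
  - apply Permutation_map, Permutation_map, P.
Qed.

Lemma swp_configs L N i j x : (i < L)%nat -> (j < L)%nat -> In x (configs L N) -> In (swp 0%nat i j x) (configs L N).
Proof. intros Hi Hj Hx. apply configs_In in Hx. destruct Hx as [H1 H2]. apply configs_In.
  rewrite swp_length. split; auto. rewrite <- H2. apply nsum_perm, swp_perm; lia. Qed.

Lemma SS_configs_swp L N i j (g : list nat -> R) : (i < L)%nat -> (j < L)%nat ->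
  SS (fun x => g (swp 0%nat i j x)) (configs L N) = SS g (configs L N).
Proof. intros Hi Hj. apply SS_configs_reindex.
  - intros; apply swp_configs; auto.
  - intros x y Hx Hy E. apply configs_In in Hx; apply configs_In in Hy.
    rewrite <- (swp_swp 0%nat i j x), <- (swp_swp 0%nat i j y) by lia. now rewrite E. Qed.

Definition cf (e k : nat) : R :=
  if Nat.leb e (k + ind_pos e) then / INR (fact (k + ind_pos e - e)) else 0.
Fixpoint tw (eta eta' : list nat) : R :=
  match eta, eta' with a :: t, b :: t' => cf a b * tw t t' | _, _ => 1 end.

Lemma tw_aux eta eta' : length eta = length eta' ->
  (if forallb (fun p => Nat.leb (fst p) (snd p + ind_pos (fst p))) (combine eta eta')
   then / Rprod_list (map (fun b => INR (fact b)) (map (fun p => (snd p + ind_pos (fst p) - fst p)%nat) (combine eta eta')))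
   else 0) = tw eta eta'.
Proof.
  revert eta'; induction eta as [|a t IH]; intros [|b t'] H; simpl in *; try discriminate.
  - unfold Rprod_list; simpl. lra.
  - injection H as H. rewrite <- IH by auto. unfold cf.
    destruct (Nat.leb a (b + ind_pos a)); simpl; [|lra].
    destruct (forallb _ _); [|lra]. unfold Rprod_list at 1; simpl. fold (Rprod_list (map (fun b0 => INR (fact b0)) (map (fun p => (snd p + ind_pos (fst p) - fst p)%nat) (combine t t')))).
    rewrite Rinv_mult. reflexivity.
Qed.

Lemma trans_tw L eta eta' : length eta = length eta' -> nsum eta = nsum eta' ->
  rbb_trans L eta eta' = INR (fact (Kocc eta)) * tw eta eta' * (/ INR L) ^ (Kocc eta).
Proof.
  intros H1 H2. unfold rbb_trans. rewrite <- tw_aux by auto. rewrite H2, Nat.eqb_refl.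
  destruct (forallb _ _); simpl; unfold Rdiv; lra.
Qed.

Definition dsum (eta : list nat) : nat := (nsum eta - Kocc eta)%nat.

Lemma ind_pos_le e : (ind_pos e <= e)%nat.
Proof. unfold ind_pos; destruct e; simpl; lia. Qed.
Lemma ind_pos_le1 e : (ind_pos e <= 1)%nat.
Proof. unfold ind_pos; destruct e; simpl; lia. Qed.
Lemma Kocc_cons a t : Kocc (a :: t) = (ind_pos a + Kocc t)%nat.
Proof. reflexivity. Qed.
Lemma Kocc_le_nsum t : (Kocc t <= nsum t)%nat.
Proof. induction t; [unfold Kocc, nsum; simpl; lia|]. rewrite Kocc_cons, nsum_cons. pose proof (ind_pos_le a). lia. Qed.

Lemma SS_seq_split f a b c : SS f (seq a (b + c)) = SS f (seq a b) + SS f (seq (a + b) c).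
Proof. rewrite seq_app, SS_app. reflexivity. Qed.
Lemma SS_seq_zero f a n : (forall k, (a <= k < a + n)%nat -> f k = 0) -> SS f (seq a n) = 0.
Proof. intros H. rewrite <- (SS_zero (seq a n)). apply SS_ext. intros x Hx. apply in_seq in Hx. auto. Qed.
Lemma SS_seq_offset f a n : SS f (seq a n) = SS (fun i => f (a + i)%nat) (seq 0 n).
Proof. revert a; induction n; intros a; [reflexivity|]. rewrite !SS_seq_last, IHn. f_equal. Qed.

Lemma SS_support f n a T : (a + T < n)%nat -> (forall k, (k < n)%nat -> (k < a \/ a + T < k)%nat -> f k = 0) ->
  SS f (seq 0 n) = SS (fun i => f (a + i)%nat) (seq 0 (S T)).
Proof.
  intros Hn H. replace n with (a + (S T + (n - a - S T)))%nat by lia.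
  rewrite !SS_seq_split. rewrite SS_seq_zero by (intros; apply H; lia).
  replace (SS f (seq (0 + a + S T) (n - a - S T))) with 0 by (symmetry; apply SS_seq_zero; intros; apply H; lia).
  rewrite SS_seq_offset. simpl. lra.
Qed.

Lemma sum_f_R0_SS f n : sum_f_R0 f n = SS f (seq 0 (S n)).
Proof. symmetry; apply SS_seq_sum. Qed.

Lemma binom_sum_fact (x : R) T :
  SS (fun i => x ^ (T - i) / (INR (fact i) * INR (fact (T - i)))) (seq 0 (S T)) = (1 + x) ^ T / INR (fact T).
Proof.
  rewrite binomial, sum_f_R0_SS. unfold Rdiv. rewrite <- SS_scal_r. apply SS_ext. intros i Hi.
  unfold C. rewrite pow1. pose proof (INR_fact_neq_0 T). pose proof (INR_fact_neq_0 i).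
  pose proof (INR_fact_neq_0 (T - i)). field. auto.
Qed.

Definition gval (L S d : nat) : R := if Nat.leb d S then INR L ^ (S - d) / INR (fact (S - d)) else 0.

Lemma lemma_G L : forall eta M, length eta = L -> SS (tw eta) (configs L M) = gval L M (dsum eta).
Proof.
  induction L as [|L IH]; intros eta M Hl.
  - destruct eta; [|discriminate]. unfold dsum, gval; simpl. destruct M; simpl.
    + unfold SS; simpl. lra.
    + unfold SS; simpl. lra.
  - destruct eta as [|e er]; [discriminate|]. injection Hl as Hl.
    cbn [configs]. rewrite SS_flat_map.
    assert (E : forall k, SS (tw (e :: er)) (map (cons k) (configs L (M - k))) = cf e k * gval L (M - k) (dsum er)).
    { intros k. rewrite SS_map. cbn [tw]. rewrite SS_scal. rewrite IH; auto. }
    rewrite (SS_ext _ _ _ (fun k _ => E k)).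
    set (a := (e - ind_pos e)%nat).
    assert (Hd : dsum (e :: er) = (a + dsum er)%nat).
    { unfold dsum, a. rewrite nsum_cons, Kocc_cons. pose proof (ind_pos_le e). pose proof (Kocc_le_nsum er). lia. }
    assert (Hcf : forall k, cf e k = if Nat.leb a k then / INR (fact (k - a)) else 0).
    { intros k. unfold cf, a. pose proof (ind_pos_le e).
      destruct (Nat.leb_spec e (k + ind_pos e)); destruct (Nat.leb_spec (e - ind_pos e) k); try lia; auto.
      f_equal. f_equal. f_equal. lia. }
    clearbody a. rewrite Hd. unfold gval at 2. destruct (Nat.leb_spec (a + dsum er) M) as [HS|HS].
    + remember (M - (a + dsum er))%nat as T eqn:HT.
      rewrite (SS_support _ (Datatypes.S M) a T); [ | lia | ].
      2:{ intros k Hk' Hk; rewrite Hcf; unfold gval.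
        destruct (Nat.leb_spec a k); destruct (Nat.leb_spec (dsum er) (M - k)); try lia; try lra. }
      rewrite S_INR, Rplus_comm.
      rewrite <- binom_sum_fact. apply SS_ext. intros i Hi. apply in_seq in Hi.
      rewrite Hcf. unfold gval. destruct (Nat.leb_spec a (a + i)); [|lia].
      destruct (Nat.leb_spec (dsum er) (M - (a + i))); [|lia].
      replace (a + i - a)%nat with i by lia. replace (M - (a + i) - dsum er)%nat with (T - i)%nat by lia.
      unfold Rdiv. rewrite Rinv_mult. ring.
    + apply SS_seq_zero. intros k Hk. rewrite Hcf. unfold gval.
      destruct (Nat.leb_spec a k); destruct (Nat.leb_spec (dsum er) (M - k)); try lia; lra.
Qed.

Definition binp (K L b : nat) : R :=
  if Nat.leb b K then C K b * (/ INR L) ^ b * (1 - / INR L) ^ (K - b) else 0.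

Lemma step1 L' N e er (f : nat -> R) : In (e :: er) (configs (S L') N) ->
  SS (fun eta' => rbb_trans (S L') (e :: er) eta' * f (hd 0%nat eta')) (configs (S L') N) =
  SS (fun b => binp (Kocc (e :: er)) (S L') b * f (e - ind_pos e + b)%nat) (seq 0 (S (Kocc (e :: er)))).
Proof.
  intros Hin. pose proof Hin as Hin'. apply configs_In in Hin'. destruct Hin' as [Hl Hn].
  simpl in Hl. injection Hl as Hl. rewrite nsum_cons in Hn.
  set (K := Kocc (e :: er)). set (c := (/ INR (S L')) ^ K).
  cbn [configs]. rewrite SS_flat_map.
  assert (E : forall k, In k (seq 0 (S N)) ->
     SS (fun eta' => rbb_trans (S L') (e :: er) eta' * f (hd 0%nat eta')) (map (cons k) (configs L' (N - k)))
     = INR (fact K) * cf e k * c * f k * gval L' (N - k) (dsum er)).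
  { intros k Hk. apply in_seq in Hk. rewrite SS_map. rewrite <- (lemma_G L' er (N - k) Hl).
    rewrite <- SS_scal. apply SS_ext. intros x Hx. apply configs_In in Hx. destruct Hx as [Hx1 Hx2].
    rewrite trans_tw; [ | simpl; lia | rewrite !nsum_cons; lia]. cbn [tw hd]. fold K. unfold c. ring. }
  rewrite (SS_ext _ _ _ E).
  set (a := (e - ind_pos e)%nat).
  assert (HK : K = (ind_pos e + Kocc er)%nat) by reflexivity.
  pose proof (ind_pos_le e). pose proof (Kocc_le_nsum er).
  assert (Hcf : forall k, cf e k = if Nat.leb a k then / INR (fact (k - a)) else 0).
  { intros k. unfold cf, a.
    destruct (Nat.leb_spec e (k + ind_pos e)); destruct (Nat.leb_spec (e - ind_pos e) k); try lia; auto.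
    f_equal. f_equal. f_equal. lia. }
  assert (Hds : dsum er = (nsum er - Kocc er)%nat) by reflexivity.
  assert (Ha : a = (e - ind_pos e)%nat) by reflexivity. assert (Hc : c = (/ INR (S L')) ^ K) by reflexivity. clearbody a K c.
  rewrite (SS_support _ (S N) a K); [ | lia | ].
  2:{ intros k Hk' Hk. rewrite Hcf. unfold gval.
      destruct (Nat.leb_spec a k); destruct (Nat.leb_spec (dsum er) (N - k)); try lia; lra. }
  apply SS_ext. intros b Hb. apply in_seq in Hb. rewrite Hcf. unfold gval, binp.
  destruct (Nat.leb_spec a (a + b)); [|lia].
  destruct (Nat.leb_spec (dsum er) (N - (a + b))); [|lia].
  destruct (Nat.leb_spec b K); [|lia].
  replace (a + b - a)%nat with b by lia. replace (N - (a + b) - dsum er)%nat with (K - b)%nat by lia.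
  unfold C. rewrite Hc, S_INR.
  assert (HL : INR L' + 1 <> 0) by (pose proof (pos_INR L'); lra).
  replace (1 - / (INR L' + 1)) with (INR L' * / (INR L' + 1)) by (field; auto).
  rewrite Rpow_mult_distr.
  replace ((/ (INR L' + 1)) ^ K) with ((/ (INR L' + 1)) ^ b * (/ (INR L' + 1)) ^ (K - b))
    by (rewrite <- pow_add; f_equal; lia).
  pose proof (INR_fact_neq_0 b). pose proof (INR_fact_neq_0 (K - b)).
  field. auto.
Qed.

Lemma SS_seq0_S f n : SS f (seq 0 (S n)) = f 0%nat + SS (fun i => f (S i)) (seq 0 n).
Proof. cbn [seq]. rewrite SS_cons, SS_seq_shift. reflexivity. Qed.

Lemma C_shift K' i : INR (S i) * C (S K') (S i) = INR (S K') * C K' i.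
Proof.
  unfold C. replace (S K' - S i)%nat with (K' - i)%nat by lia.
  replace (fact (S K')) with (S K' * fact K')%nat by reflexivity.
  replace (fact (S i)) with (S i * fact i)%nat by reflexivity.
  rewrite !mult_INR. pose proof (INR_fact_neq_0 i). pose proof (INR_fact_neq_0 (K' - i)).
  pose proof (pos_INR i). field. rewrite S_INR. repeat split; auto; lra.
Qed.

Lemma bin_sum0 x y K : SS (fun b => C K b * x ^ b * y ^ (K - b)) (seq 0 (S K)) = (x + y) ^ K.
Proof. rewrite binomial, SS_seq_sum. reflexivity. Qed.

Lemma shiftC K' (g : nat -> R) :
  SS (fun b => INR b * C (S K') b * g b) (seq 0 (S (S K'))) = INR (S K') * SS (fun i => C K' i * g (S i)) (seq 0 (S K')).
Proof.
  rewrite SS_seq0_S. simpl (INR 0). rewrite Rmult_0_l, Rmult_0_l, Rplus_0_l.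
  rewrite <- SS_scal. apply SS_ext. intros i _. rewrite C_shift. ring.
Qed.

Lemma bin_sum1 x y K : SS (fun b => INR b * (C K b * x ^ b * y ^ (K - b))) (seq 0 (S K)) = INR K * x * (x + y) ^ (K - 1).
Proof.
  destruct K as [|K'].
  - unfold SS; simpl. lra.
  - transitivity (SS (fun b => INR b * C (S K') b * (x ^ b * y ^ (S K' - b))) (seq 0 (S (S K')))).
    { apply SS_ext; intros; ring. }
    rewrite shiftC. replace (S K' - 1)%nat with K' by lia. rewrite <- bin_sum0.
    rewrite <- SS_scal. rewrite <- SS_scal. apply SS_ext. intros i _. simpl (S K' - S i)%nat. simpl pow. ring.
Qed.

Lemma bin_sum2 x y K : SS (fun b => INR b * (INR b - 1) * (C K b * x ^ b * y ^ (K - b))) (seq 0 (S K)) =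
  INR K * (INR K - 1) * x ^ 2 * (x + y) ^ (K - 2).
Proof.
  destruct K as [|K'].
  - unfold SS; simpl. lra.
  - transitivity (SS (fun b => INR b * C (S K') b * ((INR b - 1) * x ^ b * y ^ (S K' - b))) (seq 0 (S (S K')))).
    { apply SS_ext; intros; ring. }
    rewrite shiftC.
    transitivity (INR (S K') * x * SS (fun i => INR i * (C K' i * x ^ i * y ^ (K' - i))) (seq 0 (S K'))).
    { rewrite Rmult_assoc. f_equal. rewrite <- SS_scal. apply SS_ext. intros i _.
      rewrite S_INR. simpl (S K' - S i)%nat. simpl pow. ring. }
    rewrite bin_sum1. replace (S K' - 2)%nat with (K' - 1)%nat by lia. rewrite S_INR. ring.
Qed.

Lemma binp_eq K L b : (b <= K)%nat -> binp K L b = C K b * (/ INR L) ^ b * (1 - / INR L) ^ (K - b).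
Proof. intros H. unfold binp. destruct (Nat.leb_spec b K); [auto|lia]. Qed.

Lemma bin_m0 K L : SS (binp K L) (seq 0 (S K)) = 1.
Proof.
  transitivity (SS (fun b => C K b * (/ INR L) ^ b * (1 - / INR L) ^ (K - b)) (seq 0 (S K))).
  { apply SS_ext. intros b Hb. apply in_seq in Hb. apply binp_eq. lia. }
  rewrite bin_sum0. replace (/ INR L + (1 - / INR L)) with 1 by ring. apply pow1.
Qed.

Lemma bin_m1 K L : SS (fun b => binp K L b * INR b) (seq 0 (S K)) = INR K * / INR L.
Proof.
  transitivity (SS (fun b => INR b * (C K b * (/ INR L) ^ b * (1 - / INR L) ^ (K - b))) (seq 0 (S K))).
  { apply SS_ext. intros b Hb. apply in_seq in Hb. rewrite binp_eq by lia. ring. }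
  rewrite bin_sum1. replace (/ INR L + (1 - / INR L)) with 1 by ring. rewrite pow1. ring.
Qed.

Lemma bin_m2 K L : SS (fun b => binp K L b * INR b ^ 2) (seq 0 (S K)) =
  INR K * / INR L * (1 - / INR L) + (INR K * / INR L) ^ 2.
Proof.
  transitivity (SS (fun b => INR b * (INR b - 1) * (C K b * (/ INR L) ^ b * (1 - / INR L) ^ (K - b))
     + INR b * (C K b * (/ INR L) ^ b * (1 - / INR L) ^ (K - b))) (seq 0 (S K))).
  { apply SS_ext. intros b Hb. apply in_seq in Hb. rewrite binp_eq by lia. ring. }
  rewrite SS_plus, bin_sum2, bin_sum1. replace (/ INR L + (1 - / INR L)) with 1 by ring. rewrite !pow1. ring.
Qed.

Lemma binp_nonneg K L b : (1 <= L)%nat -> 0 <= binp K L b.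
Proof.
  intros HL. unfold binp. destruct (Nat.leb b K); [|lra].
  assert (1 <= INR L) by (apply (le_INR 1); auto).
  assert (0 < / INR L <= 1). { split. apply Rinv_0_lt_compat; lra. rewrite <- Rinv_1. apply Rinv_le_contravar; lra. }
  apply Rmult_le_pos; [apply Rmult_le_pos|]; try (apply pow_le; lra).
  unfold C. apply Rmult_le_pos. apply pos_INR. left. apply Rinv_0_lt_compat.
  apply Rmult_lt_0_compat; apply INR_fact_lt_0.
Qed.

Definition ind (x y : list nat) : R := if list_eq_dec Nat.eq_dec x y then 1 else 0.

Lemma SS_ind (g : list nat -> R) l y : NoDup l -> In y l -> SS (fun x => g x * ind x y) l = g y.
Proof.
  induction 1 as [|a l Ha Hl IH]; intros Hy; [destruct Hy|]. rewrite SS_cons. unfold ind at 1.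
  destruct (list_eq_dec Nat.eq_dec a y) as [->|Hne].
  - rewrite (SS_ext _ (fun _ => 0)). rewrite SS_zero. lra.
    intros x Hx. unfold ind. destruct (list_eq_dec Nat.eq_dec x y); [subst; contradiction|lra].
  - destruct Hy as [->|Hy]; [congruence|]. rewrite IH; auto. lra.
Qed.
Lemma SS_ind' (g : list nat -> R) l y : NoDup l -> In y l -> SS (fun x => ind y x * g x) l = g y.
Proof. intros. rewrite <- (SS_ind g l y) by auto. apply SS_ext. intros x _. unfold ind.
  destruct (list_eq_dec Nat.eq_dec y x), (list_eq_dec Nat.eq_dec x y); subst; try congruence; lra. Qed.

Lemma tw_nonneg eta eta' : 0 <= tw eta eta'.
Proof. revert eta'; induction eta; intros [|b t]; simpl; try lra. apply Rmult_le_pos; auto.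
  unfold cf. destruct (Nat.leb _ _); [|lra]. left; apply Rinv_0_lt_compat, INR_fact_lt_0. Qed.

Lemma INR_inv_pos L : (1 <= L)%nat -> 0 < / INR L.
Proof. intros; apply Rinv_0_lt_compat. apply lt_0_INR; lia. Qed.

Lemma trans_nonneg L N x y : (1 <= L)%nat -> In x (configs L N) -> In y (configs L N) -> 0 <= rbb_trans L x y.
Proof. intros HL Hx Hy. apply configs_In in Hx; apply configs_In in Hy.
  rewrite trans_tw by lia. apply Rmult_le_pos; [apply Rmult_le_pos|].
  apply pos_INR. apply tw_nonneg. left; apply pow_lt, INR_inv_pos; auto. Qed.

Lemma trans_rowsum L N x : (1 <= L)%nat -> In x (configs L N) -> SS (rbb_trans L x) (configs L N) = 1.
Proof. intros HL Hx. destruct L as [|L']; [lia|]. destruct x as [|e er].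
  { apply configs_In in Hx; simpl in Hx; lia. }
  rewrite <- (bin_m0 (Kocc (e :: er)) (S L')).
  rewrite (SS_ext _ (fun b => binp (Kocc (e :: er)) (S L') b * 1)) by (intros; ring).
  rewrite <- (step1 L' N e er (fun _ => 1)) by auto. apply SS_ext; intros; ring. Qed.

Fixpoint Pn (L N n : nat) (x y : list nat) : R :=
  match n with
  | O => ind x y
  | S n => SS (fun z => Pn L N n x z * rbb_trans L z y) (configs L N)
  end.

Lemma Pn_nonneg L N n x y : (1 <= L)%nat -> In y (configs L N) -> 0 <= Pn L N n x y.
Proof. revert y; induction n; intros y HL Hy; simpl.
  - unfold ind; destruct (list_eq_dec _ _ _); lra.
  - apply SS_nonneg. intros z Hz. apply Rmult_le_pos; auto. apply (trans_nonneg L N); auto. Qed.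

Lemma Pn_rowsum L N n x : (1 <= L)%nat -> In x (configs L N) -> SS (Pn L N n x) (configs L N) = 1.
Proof. intros HL Hx. induction n; simpl.
  - rewrite (SS_ext _ (fun y => ind x y * (fun _ => 1) y)) by (intros; simpl; ring). apply (SS_ind' (fun _ => 1)). apply configs_NoDup. auto.
  - rewrite SS_swap. rewrite <- IHn. apply SS_ext. intros z Hz. rewrite SS_scal. rewrite trans_rowsum; auto. ring. Qed.

Lemma Pn_stat L N (d : list nat -> R) n y : (1 <= L)%nat ->
  (forall y, In y (configs L N) -> d y = SS (fun z => d z * rbb_trans L z y) (configs L N)) ->
  In y (configs L N) -> d y = SS (fun x => d x * Pn L N n x y) (configs L N).
Proof. intros HL Hd. revert y; induction n; intros y Hy; simpl.
  - symmetry. apply SS_ind; auto. apply configs_NoDup.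
  - rewrite (SS_ext _ (fun x => SS (fun z => d x * Pn L N n x z * rbb_trans L z y) (configs L N))).
    2:{ intros x _. rewrite <- SS_scal. apply SS_ext. intros; ring. }
    rewrite SS_swap. rewrite Hd by auto. apply SS_ext. intros z Hz. rewrite IHn at 1 by auto.
    rewrite <- SS_scal_r. reflexivity. Qed.

Lemma Pn_step_le L N n x z y : (1 <= L)%nat -> In z (configs L N) -> In y (configs L N) ->
  Pn L N n x z * rbb_trans L z y <= Pn L N (S n) x y.
Proof. intros HL Hz Hy. simpl. apply (SS_in_le (fun z => Pn L N n x z * rbb_trans L z y)); auto.
  intros w Hw. apply Rmult_le_pos. apply Pn_nonneg; auto. apply (trans_nonneg L N); auto. Qed.

Definition dec (e : nat) : nat := (e - ind_pos e)%nat.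
Definition fstep (x : list nat) : list nat :=
  match x with [] => [] | a :: t => (dec a + Kocc x)%nat :: map dec t end.

Lemma nsum_map_dec t : nsum (map dec t) = (nsum t - Kocc t)%nat.
Proof. induction t; [reflexivity|]. simpl map. rewrite !nsum_cons, Kocc_cons, IHt.
  pose proof (Kocc_le_nsum t). pose proof (ind_pos_le a). unfold dec. lia. Qed.

Lemma fstep_configs L N x : In x (configs L N) -> In (fstep x) (configs L N).
Proof. intros Hx. apply configs_In in Hx; apply configs_In. destruct Hx as [H1 H2].
  destruct x as [|a t]; simpl; auto. simpl in H1. rewrite length_map. split; auto.
  rewrite nsum_cons in *. rewrite nsum_map_dec, Kocc_cons. pose proof (Kocc_le_nsum t).
  pose proof (ind_pos_le a). unfold dec. lia. Qed.

Lemma cf_dec e : 0 < cf e (dec e).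
Proof. unfold cf, dec. pose proof (ind_pos_le e). destruct (Nat.leb_spec e (e - ind_pos e + ind_pos e)); [|lia].
  apply Rinv_0_lt_compat, INR_fact_lt_0. Qed.

Lemma tw_dec t : 0 < tw t (map dec t).
Proof. induction t; simpl; [lra|]. apply Rmult_lt_0_compat; auto. apply cf_dec. Qed.

Lemma trans_fstep_pos L N x : (1 <= L)%nat -> In x (configs L N) -> 0 < rbb_trans L x (fstep x).
Proof. intros HL Hx. pose proof (fstep_configs L N x Hx) as Hf.
  apply configs_In in Hx; apply configs_In in Hf. rewrite trans_tw by lia.
  apply Rmult_lt_0_compat; [apply Rmult_lt_0_compat|].
  - apply INR_fact_lt_0.
  - destruct x as [|a t]; [simpl in Hx; lia|]. simpl fstep. cbn [tw]. apply Rmult_lt_0_compat; [|apply tw_dec].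
    unfold cf. rewrite Kocc_cons. pose proof (ind_pos_le a). unfold dec.
    destruct (Nat.leb_spec a (a - ind_pos a + (ind_pos a + Kocc t) + ind_pos a)); [|lia].
    apply Rinv_0_lt_compat, INR_fact_lt_0.
  - apply pow_lt, INR_inv_pos; auto. Qed.

Lemma Pn_path L N n x : (1 <= L)%nat -> In x (configs L N) -> 0 < Pn L N n x (Nat.iter n fstep x).
Proof. intros HL Hx. induction n.
  - simpl. unfold ind. destruct (list_eq_dec _ _ _); [lra|congruence].
  - assert (Hc : In (Nat.iter n fstep x) (configs L N)).
    { clear IHn. induction n; simpl; auto. apply fstep_configs; auto. }
    eapply Rlt_le_trans; [|apply (Pn_step_le L N n x (Nat.iter n fstep x))]; auto.
    + apply Rmult_lt_0_compat; auto. apply (trans_fstep_pos L N); auto.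
    + simpl. apply fstep_configs; auto. Qed.

Lemma Kocc_pos t : (0 < nsum t)%nat -> (0 < Kocc t)%nat.
Proof. induction t; [simpl; lia|]. rewrite nsum_cons, Kocc_cons. intros H.
  destruct a; [simpl in *; lia|]. unfold ind_pos; simpl; lia. Qed.

Definition Tm (x : list nat) : nat := nsum (tl x).

Lemma Tm_iter n x : (Tm (Nat.iter n fstep x) <= Tm x - n)%nat.
Proof. induction n; [simpl; lia|]. simpl Nat.iter. set (y := Nat.iter n fstep x) in *.
  destruct y as [|a t]; [simpl in *; unfold Tm; simpl; lia|]. unfold Tm in *. simpl tl in *.
  rewrite nsum_map_dec. destruct (Nat.eq_dec (nsum t) 0); [lia|].
  pose proof (Kocc_pos t). lia. Qed.

Lemma nsum0 t : nsum t = 0%nat -> t = repeat 0%nat (length t).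
Proof. induction t; [simpl; auto|]. rewrite nsum_cons. intros H. simpl. f_equal; [lia|]. apply IHt; lia. Qed.

Lemma iter_configs L N n x : In x (configs L N) -> In (Nat.iter n fstep x) (configs L N).
Proof. intros Hx. induction n; simpl; auto. apply fstep_configs; auto. Qed.

Definition delta (L N : nat) : list nat := N :: repeat 0%nat (L - 1).

Lemma iter_delta L N x : (1 <= L)%nat -> In x (configs L N) -> Nat.iter N fstep x = delta L N.
Proof. intros HL Hx.
  assert (Hc : In (Nat.iter N fstep x) (configs L N)).
  { apply iter_configs; auto. }
  pose proof (Tm_iter N x) as HT. assert (Tm x <= N)%nat.
  { apply configs_In in Hx. destruct Hx as [_ H2]. destruct x; unfold Tm; simpl; [lia|]. rewrite nsum_cons in H2; lia. }
  apply configs_In in Hc. destruct Hc as [H1 H2]. destruct (Nat.iter N fstep x) as [|a t] eqn:E; [simpl in H1; lia|].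
  change (Tm (a :: t)) with (nsum t) in HT. unfold delta. rewrite nsum_cons in H2. simpl in H1.
  assert (nsum t = 0%nat) by lia. f_equal; [lia|]. rewrite (nsum0 t) by auto. f_equal. lia. Qed.

Lemma delta_configs L N : (1 <= L)%nat -> In (delta L N) (configs L N).
Proof. intros HL. apply configs_In. unfold delta. split; [simpl; rewrite repeat_length; lia|].
  rewrite nsum_cons. assert (forall n, nsum (repeat 0%nat n) = 0%nat) by (induction n; simpl; auto).
  rewrite H; lia. Qed.

Lemma SS_abs_eq_sign {A} (f : A -> R) l : Rabs (SS f l) = SS (fun x => Rabs (f x)) l ->
  (forall x, In x l -> 0 <= f x) \/ (forall x, In x l -> f x <= 0).
Proof. intros H. destruct (Rle_dec 0 (SS f l)).
  - left. rewrite Rabs_right in H by lra.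
    assert (E : SS (fun x => Rabs (f x) - f x) l = 0) by (rewrite SS_minus; lra).
    intros x Hx. pose proof (SS_zero_nonneg (fun x => Rabs (f x) - f x) l) as Z.
    assert (Rabs (f x) - f x = 0). { apply Z; auto. intros y _. pose proof (Rle_abs (f y)); lra. }
    pose proof (Rabs_pos (f x)); lra.
  - right. rewrite Rabs_left in H by lra.
    assert (E : SS (fun x => Rabs (f x) + f x) l = 0) by (rewrite SS_plus; lra).
    intros x Hx. pose proof (SS_zero_nonneg (fun x => Rabs (f x) + f x) l) as Z.
    assert (Rabs (f x) + f x = 0). { apply Z; auto. intros y _. pose proof (Rle_abs (- f y)); rewrite Rabs_Ropp in *; lra. }
    pose proof (Rabs_pos (f x)); lra. Qed.

Lemma signed_zero L N (d : list nat -> R) : (1 <= L)%nat ->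
  (forall y, In y (configs L N) -> d y = SS (fun z => d z * rbb_trans L z y) (configs L N)) ->
  SS d (configs L N) = 0 -> forall x, In x (configs L N) -> d x = 0.
Proof.
  intros HL Hd Hs. set (cl := configs L N) in *. set (Q := Pn L N N).
  assert (Hst : forall y, In y cl -> d y = SS (fun x => d x * Q x y) cl) by (intros; apply Pn_stat; auto).
  assert (Hle : forall y, In y cl -> Rabs (d y) <= SS (fun x => Rabs (d x) * Q x y) cl).
  { intros y Hy. rewrite Hst at 1 by auto. eapply Rle_trans; [apply SS_abs|]. apply SS_le. intros x Hx.
    rewrite Rabs_mult. rewrite (Rabs_right (Q x y)); [lra|]. apply Rle_ge, Pn_nonneg; auto. }
  assert (Hsum : SS (fun y => SS (fun x => Rabs (d x) * Q x y) cl) cl = SS (fun x => Rabs (d x)) cl).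
  { rewrite SS_swap. apply SS_ext. intros x Hx. rewrite SS_scal. unfold Q. rewrite Pn_rowsum; auto. ring. }
  assert (Hgap : SS (fun y => SS (fun x => Rabs (d x) * Q x y) cl - Rabs (d y)) cl = 0) by (rewrite SS_minus; lra).
  set (dl := delta L N). assert (Hdl : In dl cl) by (apply delta_configs; auto).
  assert (E1 : SS (fun x => Rabs (d x) * Q x dl) cl - Rabs (d dl) = 0).
  { apply (SS_zero_nonneg (fun y => SS (fun x => Rabs (d x) * Q x y) cl - Rabs (d y)) cl); auto.
    intros y Hy. pose proof (Hle y Hy). lra. }
  assert (E2 : Rabs (SS (fun x => d x * Q x dl) cl) = SS (fun x => Rabs (d x * Q x dl)) cl).
  { rewrite <- Hst by auto. rewrite (SS_ext _ (fun x => Rabs (d x) * Q x dl)). lra.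
    intros x Hx. rewrite Rabs_mult, (Rabs_right (Q x dl)); auto. apply Rle_ge, Pn_nonneg; auto. }
  assert (Qpos : forall x, In x cl -> 0 < Q x dl).
  { intros x Hx. unfold Q, dl. rewrite <- (iter_delta L N x) by auto. apply Pn_path; auto. }
  apply SS_abs_eq_sign in E2. destruct E2 as [E2|E2].
  - assert (Hp : forall x, In x cl -> 0 <= d x).
    { intros x Hx. specialize (E2 x Hx). specialize (Qpos x Hx).
      destruct (Rle_dec 0 (d x)); auto. exfalso. assert (d x * Q x dl < 0) by (apply Rmult_neg_pos; lra). lra. }
    apply SS_zero_nonneg; auto.
  - assert (Hp : forall x, In x cl -> 0 <= - d x).
    { intros x Hx. specialize (E2 x Hx). specialize (Qpos x Hx).
      destruct (Rle_dec (d x) 0); [lra|]. exfalso. assert (0 < d x * Q x dl) by (apply Rmult_lt_0_compat; lra). lra. }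
    intros x Hx. assert (- d x = 0); [|lra].
    apply (SS_zero_nonneg (fun x => - d x) cl); auto.
    rewrite (SS_ext _ (fun x => -1 * d x)) by (intros; ring). rewrite SS_scal, Hs. ring.
Qed.

Lemma stationary_unique L N nu1 nu2 : (1 <= L)%nat -> rbb_stationary L N nu1 -> rbb_stationary L N nu2 ->
  forall x, In x (configs L N) -> nu1 x = nu2 x.
Proof. intros HL [_ [S1 T1]] [_ [S2 T2]] x Hx.
  assert (nu1 x - nu2 x = 0); [|lra].
  apply (signed_zero L N (fun x => nu1 x - nu2 x)); auto.
  - intros y Hy. rewrite T1, T2 by auto. fold (SS (fun z => nu1 z * rbb_trans L z y) (configs L N)). fold (SS (fun z => nu2 z * rbb_trans L z y) (configs L N)). rewrite <- SS_minus. apply SS_ext. intros; ring.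
  - rewrite SS_minus. unfold SS. rewrite S1, S2. ring. Qed.

Lemma nu_swp L N nu i j : (1 <= L)%nat -> (i < L)%nat -> (j < L)%nat -> rbb_stationary L N nu ->
  forall x, In x (configs L N) -> nu (swp 0%nat i j x) = nu x.
Proof. intros HL Hi Hj Hs. apply (stationary_unique L N); auto.
  destruct Hs as [P1 [P2 P3]]. split; [|split].
  - intros x Hx. apply P1. apply swp_configs; auto.
  - rewrite <- P2. fold (SS (fun x => nu (swp 0%nat i j x)) (configs L N)). apply SS_configs_swp; auto.
  - intros y Hy. rewrite P3 by (apply swp_configs; auto).
    fold (SS (fun x => nu x * rbb_trans L x (swp 0%nat i j y)) (configs L N)).
    fold (SS (fun x => nu (swp 0%nat i j x) * rbb_trans L x y) (configs L N)).
    rewrite <- (SS_configs_swp L N i j (fun x => nu x * rbb_trans L x (swp 0%nat i j y))) by auto.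
    apply SS_ext. intros x Hx. f_equal. apply configs_In in Hx. apply configs_In in Hy.
    rewrite trans_swp; try lia. reflexivity. Qed.

Definition Ex L N (nu : list nat -> R) (g : list nat -> R) : R := SS (fun x => nu x * g x) (configs L N).

Lemma Ex_ext L N nu f g : (forall x, In x (configs L N) -> f x = g x) -> Ex L N nu f = Ex L N nu g.
Proof. intros H. unfold Ex. apply SS_ext. intros x Hx. rewrite H; auto. Qed.
Lemma Ex_plus L N nu f g : Ex L N nu (fun x => f x + g x) = Ex L N nu f + Ex L N nu g.
Proof. unfold Ex. rewrite <- SS_plus. apply SS_ext; intros; ring. Qed.
Lemma Ex_scal L N nu c f : Ex L N nu (fun x => c * f x) = c * Ex L N nu f.
Proof. unfold Ex. rewrite <- SS_scal. apply SS_ext; intros; ring. Qed.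
Lemma Ex_const L N nu c : rbb_stationary L N nu -> Ex L N nu (fun _ => c) = c.
Proof. intros [_ [H _]]. unfold Ex. rewrite SS_scal_r. unfold SS. rewrite H. ring. Qed.
Lemma Ex_SS {A} L N nu (F : A -> list nat -> R) l : Ex L N nu (fun x => SS (fun a => F a x) l) = SS (fun a => Ex L N nu (F a)) l.
Proof. unfold Ex. rewrite <- SS_swap. apply SS_ext. intros x _. rewrite <- SS_scal. reflexivity. Qed.

Lemma Ex_stat L N nu g : rbb_stationary L N nu ->
  Ex L N nu g = Ex L N nu (fun x => SS (fun y => rbb_trans L x y * g y) (configs L N)).
Proof. intros [_ [_ H]]. unfold Ex.
  rewrite (SS_ext (fun y => nu y * g y) (fun y => SS (fun x => nu x * rbb_trans L x y * g y) (configs L N))).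
  - rewrite SS_swap. apply SS_ext. intros x _. rewrite <- SS_scal. apply SS_ext; intros; ring.
  - intros y Hy. rewrite H by auto. fold (SS (fun x => nu x * rbb_trans L x y) (configs L N)). rewrite SS_scal_r. reflexivity. Qed.

Lemma Ex_swp L N nu i j g : (1 <= L)%nat -> (i < L)%nat -> (j < L)%nat -> rbb_stationary L N nu ->
  Ex L N nu (fun x => g (swp 0%nat i j x)) = Ex L N nu g.
Proof. intros HL Hi Hj Hs. unfold Ex.
  rewrite <- (SS_configs_swp L N i j (fun x => nu x * g x)) by auto. apply SS_ext. intros x Hx.
  rewrite (nu_swp L N nu i j) by auto. reflexivity. Qed.

Definition h0 (x : list nat) : nat := nth 0 x 0%nat.
Definition wj (j : nat) (x : list nat) : R := INR (ind_pos (nth j x 0%nat)).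
Definition KK (x : list nat) : R := INR (Kocc x).

Lemma step1' L N x f : (1 <= L)%nat -> In x (configs L N) ->
  SS (fun y => rbb_trans L x y * f (h0 y)) (configs L N) =
  SS (fun b => binp (Kocc x) L b * f (dec (h0 x) + b)%nat) (seq 0 (S (Kocc x))).
Proof. intros HL Hx. destruct L as [|L']; [lia|]. destruct x as [|e er].
  { apply configs_In in Hx; simpl in Hx; lia. }
  rewrite <- (step1 L' N) by auto. apply SS_ext. intros y Hy. unfold h0. destruct y; reflexivity. Qed.

Lemma SS_nth F x : SS (fun j => F (nth j x 0%nat)) (seq 0 (length x)) = SS F x.
Proof. induction x; [reflexivity|]. simpl length. rewrite SS_seq0_S. rewrite SS_cons. simpl nth. rewrite IHx. reflexivity. Qed.

Lemma nsum_INR x : INR (nsum x) = SS INR x.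
Proof. induction x; [reflexivity|]. rewrite nsum_cons, plus_INR, SS_cons, IHx. reflexivity. Qed.
Lemma KK_sum x : KK x = SS (fun j => wj j x) (seq 0 (length x)).
Proof. unfold KK, wj. rewrite (SS_nth (fun a => INR (ind_pos a))). unfold Kocc. rewrite nsum_INR, SS_map. reflexivity. Qed.

Lemma ind_pos_cases a : (ind_pos a = 0 /\ a = 0 \/ ind_pos a = 1 /\ 0 < a)%nat.
Proof. unfold ind_pos. destruct a; simpl; lia. Qed.

Section Id.
Variables (L N : nat) (nu : list nat -> R).
Hypothesis HL : (2 <= L)%nat.
Hypothesis Hs : rbb_stationary L N nu.

Definition Aw := Ex L N nu (wj 0).
Definition Bw := Ex L N nu (fun x => wj 0 x * wj 1 x).

Lemma Ex_nth_sym (H : nat -> R -> R) j : (j < L)%nat ->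
  Ex L N nu (fun x => H (nth j x 0%nat) (KK x)) = Ex L N nu (fun x => H (h0 x) (KK x)).
Proof. intros Hj. rewrite <- (Ex_swp L N nu 0 j (fun x => H (h0 x) (KK x))) by (auto; lia).
  apply Ex_ext. intros x Hx. apply configs_In in Hx. destruct Hx as [Hl _]. unfold h0, KK.
  rewrite swp_nth by lia. unfold tr. simpl. unfold Kocc.
  rewrite (nsum_perm (map ind_pos (swp 0%nat 0 j x)) (map ind_pos x)) by (apply Permutation_map, swp_perm; lia).
  destruct j; reflexivity. Qed.

Lemma Ex_sum_nth (H : nat -> R -> R) :
  Ex L N nu (fun x => SS (fun a => H a (KK x)) x) = INR L * Ex L N nu (fun x => H (h0 x) (KK x)).
Proof.
  rewrite (Ex_ext _ _ _ _ (fun x => SS (fun j => H (nth j x 0%nat) (KK x)) (seq 0 L))).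
  2:{ intros x Hx. apply configs_In in Hx. destruct Hx as [<- _]. rewrite (SS_nth (fun a => H a (KK x))). reflexivity. }
  rewrite Ex_SS. rewrite (SS_ext _ (fun _ => Ex L N nu (fun x => H (h0 x) (KK x)))).
  - rewrite SS_const, length_seq. reflexivity.
  - intros j Hj. apply in_seq in Hj. apply Ex_nth_sym. lia. Qed.

Lemma Eh : Ex L N nu (fun x => INR (h0 x)) = INR N / INR L.
Proof.
  assert (E : Ex L N nu (fun x => SS (fun a => (fun a _ => INR a) a (KK x)) x) = INR N).
  { rewrite <- (Ex_const L N nu (INR N) Hs). apply Ex_ext. intros x Hx. apply configs_In in Hx.
    destruct Hx as [_ <-]. rewrite nsum_INR. reflexivity. }
  rewrite Ex_sum_nth in E. assert (0 < INR L) by (apply lt_0_INR; lia).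
  rewrite <- E. field. lra. Qed.

Lemma EhK : Ex L N nu (fun x => INR (h0 x) * KK x) = INR N * Aw.
Proof.
  assert (E : Ex L N nu (fun x => SS (fun a => (fun a k => INR a * k) a (KK x)) x) = INR N * Ex L N nu KK).
  { rewrite <- Ex_scal. apply Ex_ext. intros x Hx. apply configs_In in Hx.
    destruct Hx as [_ <-]. rewrite nsum_INR. rewrite SS_scal_r. reflexivity. }
  rewrite Ex_sum_nth in E.
  assert (E2 : Ex L N nu (fun x => SS (fun a => (fun a (_ : R) => INR (ind_pos a)) a (KK x)) x) = Ex L N nu KK).
  { apply Ex_ext. intros x _. unfold KK, Kocc. rewrite nsum_INR, SS_map. reflexivity. }
  rewrite Ex_sum_nth in E2. assert (0 < INR L) by (apply lt_0_INR; lia).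
  unfold Aw. replace (Ex L N nu (wj 0)) with (Ex L N nu KK / INR L).
  - apply (Rmult_eq_reg_l (INR L)); [|lra]. rewrite E. field. lra.
  - rewrite <- E2. unfold wj, h0. field. lra. Qed.

Lemma EK : Ex L N nu KK = INR L * Aw.
Proof.
  pose proof (Ex_sum_nth (fun a _ => INR (ind_pos a))) as E. cbv beta in E.
  assert (E2 : Ex L N nu KK = Ex L N nu (fun x => SS (fun a => INR (ind_pos a)) x)).
  { apply Ex_ext. intros x _. unfold KK at 1, Kocc. rewrite nsum_INR, SS_map. reflexivity. }
  rewrite E2, E. reflexivity. Qed.

Lemma EK2 : Ex L N nu (fun x => KK x ^ 2) = INR L * Ex L N nu (fun x => wj 0 x * KK x).
Proof.
  pose proof (Ex_sum_nth (fun a k => INR (ind_pos a) * k)) as E. cbv beta in E.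
  assert (E2 : Ex L N nu (fun x => KK x ^ 2) = Ex L N nu (fun x => SS (fun a => INR (ind_pos a) * KK x) x)).
  { apply Ex_ext. intros x _. rewrite SS_scal_r. unfold KK at 1 2, Kocc. rewrite nsum_INR, SS_map. simpl. ring. }
  rewrite E2, E. reflexivity. Qed.

Lemma EwK : Ex L N nu (fun x => wj 0 x * KK x) = Aw + (INR L - 1) * Bw.
Proof.
  rewrite (Ex_ext _ _ _ _ (fun x => SS (fun j => wj 0 x * wj j x) (seq 0 L))).
  2:{ intros x Hx. apply configs_In in Hx. destruct Hx as [<- _]. rewrite KK_sum. rewrite SS_scal. reflexivity. }
  rewrite Ex_SS. replace L with (S (L - 1)) at 1 by lia. rewrite SS_seq0_S.
  rewrite (SS_ext _ (fun _ => Bw)).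
  - rewrite SS_const, length_seq. unfold Aw. rewrite minus_INR by lia. simpl (INR 1).
    f_equal. apply Ex_ext. intros x _. unfold wj. destruct (ind_pos_cases (nth 0 x 0%nat)) as [[-> _]|[-> _]]; simpl; ring.
  - intros j Hj. apply in_seq in Hj. unfold Bw.
    rewrite <- (Ex_swp L N nu 1 (S j) (fun x => wj 0 x * wj 1 x)) by (try exact Hs; lia).
    apply Ex_ext. intros x Hx. apply configs_In in Hx. destruct Hx as [Hl _]. unfold wj.
    rewrite !swp_nth by lia. unfold tr. simpl. destruct j; reflexivity. Qed.

Lemma quad_id : INR N / INR L * (-2) + 2 * Aw + 2 * (INR N / INR L) * Aw - 2 * Aw / INR L - (INR L - 1) / INR L * Bw = 0.
Proof.
  assert (HLp : 0 < INR L) by (apply lt_0_INR; lia).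
  pose proof (Ex_stat L N nu (fun y => INR (h0 y) ^ 2) Hs) as E.
  rewrite (Ex_ext _ _ _ (fun x => SS (fun y => rbb_trans L x y * (fun a => INR a ^ 2) (h0 y)) (configs L N))
     (fun x => (INR (h0 x) ^ 2 - 2 * INR (h0 x) + wj 0 x) + 2 * (INR (h0 x) - wj 0 x) * (KK x / INR L)
               + (KK x / INR L) * (1 - / INR L) + (KK x / INR L) ^ 2)) in E.
  2:{ intros x Hx. rewrite (step1' L N x (fun a => INR a ^ 2)) by (auto; lia).
      rewrite (SS_ext _ (fun b => INR (dec (h0 x)) ^ 2 * binp (Kocc x) L b + 2 * INR (dec (h0 x)) * (binp (Kocc x) L b * INR b)
               + binp (Kocc x) L b * INR b ^ 2)) by (intros; rewrite plus_INR; ring).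
      rewrite !SS_plus, !SS_scal, bin_m0, bin_m1, bin_m2. unfold dec, wj, h0, KK.
      destruct (ind_pos_cases (nth 0 x 0%nat)) as [[E1 E2]|[E1 E2]]; rewrite E1.
      - rewrite E2. simpl. unfold Rdiv. ring.
      - rewrite minus_INR by lia. simpl (INR 1). unfold Rdiv. ring. }
  assert (E3 : Ex L N nu (fun x => (-2) * INR (h0 x) + 1 * wj 0 x + (2 / INR L) * (INR (h0 x) * KK x)
        + (-2 / INR L) * (wj 0 x * KK x) + ((1 - / INR L) / INR L) * KK x + (/ INR L ^ 2) * (KK x ^ 2)) = 0).
  { transitivity (Ex L N nu (fun x => INR (h0 x) ^ 2 - 2 * INR (h0 x) + wj 0 x + 2 * (INR (h0 x) - wj 0 x) * (KK x / INR L) +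
       KK x / INR L * (1 - / INR L) + (KK x / INR L) ^ 2) - Ex L N nu (fun y => INR (h0 y) ^ 2)).
    - unfold Ex. rewrite <- SS_minus. apply SS_ext. intros x _. field. lra.
    - rewrite <- E. ring. }
  rewrite !Ex_plus, !Ex_scal in E3. rewrite EhK, EwK, EK, EK2, EwK, Eh in E3. fold Aw in E3.
  apply (Rmult_eq_reg_l (INR L)); [|lra]. rewrite <- E3. field. lra.
Qed.
End Id.

Definition eqi (a b : nat) : R := if Nat.eqb a b then 1 else 0.

Lemma binp_zero K L b : (K < b)%nat -> binp K L b = 0.
Proof. intros H. unfold binp. destruct (Nat.leb_spec b K); [lia|auto]. Qed.

Lemma bin_pick K L d j : SS (fun b => binp K L b * eqi (d + b) j) (seq 0 (S K)) = if Nat.leb d j then binp K L (j - d) else 0.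
Proof.
  destruct (Nat.leb_spec d j).
  - destruct (Nat.le_gt_cases (j - d) K).
    + rewrite (SS_support _ (S K) (j - d) 0); [ | lia | ].
      * cbn [seq]. rewrite SS_cons, SS_nil. unfold eqi. replace (d + (j - d + 0))%nat with j by lia. rewrite Nat.eqb_refl.
        replace (j - d + 0)%nat with (j - d)%nat by lia. ring.
      * intros k _ Hk. unfold eqi. destruct (Nat.eqb_spec (d + k) j); [lia|ring].
    + rewrite binp_zero by lia. rewrite <- (SS_zero (seq 0 (S K))). apply SS_ext. intros b Hb. apply in_seq in Hb.
      unfold eqi. destruct (Nat.eqb_spec (d + b) j); [lia|ring].
  - rewrite <- (SS_zero (seq 0 (S K))). apply SS_ext. intros b Hb.
    unfold eqi. destruct (Nat.eqb_spec (d + b) j); [lia|ring].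
Qed.

Lemma marginal_Ex L N nu k : marginal L N nu k =
  Ex L N nu (fun x => if list_eq_dec Nat.eq_dec (firstn (length k) x) k then 1 else 0).
Proof. unfold marginal. fold (SS nu (filter (fun eta => if list_eq_dec Nat.eq_dec (firstn (length k) eta) k then true else false) (configs L N))).
  rewrite SS_filter. unfold Ex. apply SS_ext. intros x _. destruct (list_eq_dec _ _ _); ring. Qed.

Lemma marg1 L N nu a : (1 <= L)%nat -> marginal L N nu [a] = Ex L N nu (fun x => eqi (h0 x) a).
Proof. intros HL. rewrite marginal_Ex. apply Ex_ext. intros x Hx. apply configs_In in Hx. destruct Hx as [Hl _].
  destruct x as [|e t]; [simpl in Hl; lia|]. change (firstn (length [a]) (e :: t)) with [e]. unfold eqi, h0. cbn [nth].
  destruct (list_eq_dec Nat.eq_dec [e] [a]) as [E|E]; destruct (Nat.eqb_spec e a); subst; try congruence; auto.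
  Qed.

Lemma marg2 L N nu : (2 <= L)%nat -> marginal L N nu [0%nat; 0%nat] = Ex L N nu (fun x => eqi (h0 x) 0 * eqi (nth 1 x 0%nat) 0).
Proof. intros HL. rewrite marginal_Ex. apply Ex_ext. intros x Hx. apply configs_In in Hx. destruct Hx as [Hl _].
  destruct x as [|e [|f t]]; simpl in Hl; try lia. change (firstn (length [0%nat; 0%nat]) (e :: f :: t)) with [e; f]. unfold eqi, h0. cbn [nth].
  destruct (list_eq_dec Nat.eq_dec [e; f] [0%nat; 0%nat]) as [E|E]; destruct (Nat.eqb_spec e 0); destruct (Nat.eqb_spec f 0);
    subst; try congruence; try ring; inversion E; subst; contradiction. Qed.

Section S2.
Variables (L N : nat) (nu : list nat -> R).
Hypothesis HL : (2 <= L)%nat.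
Hypothesis Hs : rbb_stationary L N nu.

Lemma wj_eqi x j : wj j x = 1 - eqi (nth j x 0%nat) 0.
Proof. unfold wj, eqi. destruct (nth j x 0%nat); simpl; ring. Qed.

Lemma Aw_marg : Aw L N nu = 1 - marginal L N nu [0%nat].
Proof. rewrite marg1 by lia. unfold Aw. rewrite <- (Ex_const L N nu 1 Hs).
  unfold Ex. rewrite <- SS_minus. apply SS_ext. intros x _. rewrite wj_eqi. unfold h0. ring. Qed.

Lemma Bw_marg : Bw L N nu = 1 - 2 * marginal L N nu [0%nat] + marginal L N nu [0%nat; 0%nat].
Proof. rewrite marg2, marg1 by lia. unfold Bw.
  assert (Sym : Ex L N nu (fun x => eqi (nth 1 x 0%nat) 0) = Ex L N nu (fun x => eqi (h0 x) 0)).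
  { apply (Ex_nth_sym L N nu HL Hs (fun a _ => eqi a 0) 1). lia. }
  rewrite (Ex_ext _ _ _ _ (fun x => 1 + (-1) * eqi (h0 x) 0 + (-1) * eqi (nth 1 x 0%nat) 0 + 1 * (eqi (h0 x) 0 * eqi (nth 1 x 0%nat) 0))).
  2:{ intros x _. rewrite !wj_eqi. unfold h0. ring. }
  rewrite !Ex_plus, !Ex_scal, Sym, Ex_const by auto. ring. Qed.

Lemma conc c : Ex L N nu (fun x => (KK x / INR L - c) ^ 2) = (Aw L N nu + (INR L - 1) * Bw L N nu) / INR L - 2 * c * Aw L N nu + c ^ 2.
Proof.
  assert (HLp : 0 < INR L) by (apply lt_0_INR; lia).
  rewrite (Ex_ext _ _ _ _ (fun x => (/ INR L ^ 2) * KK x ^ 2 + (-2 * c / INR L) * KK x + c ^ 2)) by (intros; field; lra).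
  rewrite !Ex_plus, !Ex_scal, Ex_const by auto. rewrite EK2, EwK, EK by auto. field. lra. Qed.

Lemma md1_fin j : marginal L N nu [j] =
  SS (fun i => Ex L N nu (fun x => eqi (h0 x) i * binp (Kocc x) L (j + ind_pos i - i))) (seq 0 (S (S j))).
Proof.
  rewrite marg1 by lia. rewrite (Ex_stat L N nu _ Hs).
  rewrite (Ex_ext _ _ _ _ (fun x => SS (fun i => eqi (h0 x) i * binp (Kocc x) L (j + ind_pos i - i)) (seq 0 (S (S j))))).
  - apply Ex_SS.
  - intros x Hx. rewrite (step1' L N x (fun a => eqi a j)) by (auto; lia). rewrite bin_pick.
    destruct (Nat.le_gt_cases (h0 x) (S j)) as [Hh|Hh].
    + rewrite (SS_support _ (S (S j)) (h0 x) 0); [ | lia | ].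
      * cbn [seq]. rewrite SS_cons, SS_nil. unfold eqi at 1. replace (h0 x + 0)%nat with (h0 x) by lia. rewrite Nat.eqb_refl.
        unfold dec. pose proof (ind_pos_le (h0 x)). destruct (ind_pos_cases (h0 x)) as [[E1 E2]|[E1 E2]]; rewrite E1.
        -- destruct (Nat.leb_spec (h0 x - 0) j); [|lia]. replace (j - (h0 x - 0))%nat with (j + 0 - h0 x)%nat by lia. ring.
        -- destruct (Nat.leb_spec (h0 x - 1) j); [|lia]. replace (j - (h0 x - 1))%nat with (j + 1 - h0 x)%nat by lia. ring.
      * intros k _ Hk. unfold eqi. destruct (Nat.eqb_spec (h0 x) k); [lia|ring].
    + rewrite (SS_ext _ (fun _ => 0)), SS_zero.
      * unfold dec. pose proof (ind_pos_le1 (h0 x)). destruct (Nat.leb_spec (h0 x - ind_pos (h0 x)) j); [lia|]. reflexivity.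
      * intros i Hi. apply in_seq in Hi. unfold eqi. destruct (Nat.eqb_spec (h0 x) i); [lia|ring].
Qed.
End S2.

Lemma abs_inv x a : Rabs x <= a -> - a <= x <= a.
Proof. intros H. pose proof (Rle_abs x). pose proof (Rle_abs (- x)). rewrite Rabs_Ropp in *. lra. Qed.

Lemma exp_le a b : a <= b -> exp a <= exp b.
Proof. intros [H|H]; [left; apply exp_increasing; auto|subst; lra]. Qed.

Lemma exp_pow a n : exp a ^ n = exp (INR n * a).
Proof. induction n; simpl pow. rewrite Rmult_0_l, exp_0; reflexivity.
  rewrite IHn, <- exp_plus, S_INR. f_equal. ring. Qed.

Lemma exp_lip a b : a <= 0 -> b <= 0 -> Rabs (exp a - exp b) <= Rabs (a - b).
Proof.
  assert (G : forall a b, a <= b -> b <= 0 -> Rabs (exp a - exp b) <= Rabs (a - b)).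
  { intros a0 b0 Hab Hb. rewrite Rabs_minus_sym, (Rabs_minus_sym a0).
    assert (exp a0 <= exp b0) by (apply exp_le; auto).
    rewrite !Rabs_right by lra.
    replace (exp a0) with (exp b0 * exp (a0 - b0)) by (rewrite <- exp_plus; f_equal; ring).
    pose proof (exp_ineq1_le (a0 - b0)). assert (exp b0 <= 1) by (rewrite <- exp_0; apply exp_le; auto).
    pose proof (exp_pos b0). assert (exp (a0 - b0) <= 1) by (rewrite <- exp_0; apply exp_le; lra).
    assert (exp b0 * (1 - exp (a0 - b0)) <= 1 * (b0 - a0)) by (apply Rmult_le_compat; lra). lra. }
  intros Ha Hb. destruct (Rle_dec a b). apply G; auto.
  rewrite Rabs_minus_sym, (Rabs_minus_sym a). apply G; lra. Qed.

Lemma pow_lip M a b m : 1 <= M -> 0 <= a <= M -> 0 <= b <= M -> Rabs (a ^ m - b ^ m) <= INR m * M ^ m * Rabs (a - b).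
Proof.
  intros HM Ha Hb. induction m.
  - simpl. rewrite Rminus_diag, Rabs_R0. lra.
  - replace (a ^ S m - b ^ S m) with (a * (a ^ m - b ^ m) + b ^ m * (a - b)) by (simpl; ring).
    eapply Rle_trans; [apply Rabs_triang|]. rewrite !Rabs_mult.
    rewrite (Rabs_right a) by lra. rewrite (Rabs_right (b ^ m)) by (apply Rle_ge, pow_le; lra).
    assert (b ^ m <= M ^ m) by (apply pow_incr; lra).
    assert (M ^ m <= M ^ S m) by (simpl; pose proof (pow_le M m); nra).
    pose proof (Rabs_pos (a - b)). pose proof (Rabs_pos (a ^ m - b ^ m)). pose proof (pos_INR m).
    assert (a * Rabs (a ^ m - b ^ m) <= M * (INR m * M ^ m * Rabs (a - b))) by (apply Rmult_le_compat; lra).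
    rewrite S_INR. simpl pow.
    assert (M * (INR m * M ^ m * Rabs (a - b)) = INR m * (M * M ^ m) * Rabs (a - b)) by ring.
    assert (b ^ m * Rabs (a - b) <= M * M ^ m * Rabs (a - b)) by (apply Rmult_le_compat_r; simpl in *; lra).
    nra. Qed.

Lemma one_minus_bounds l : 2 <= l -> exp (- / (l - 1)) <= 1 - / l <= exp (- / l).
Proof. intros Hl. split.
  - assert (H1 : 1 + / (l - 1) <= exp (/ (l - 1))) by apply exp_ineq1_le.
    rewrite exp_Ropp. assert (0 < / (l - 1)) by (apply Rinv_0_lt_compat; lra).
    replace (1 + / (l - 1)) with (/ (1 - / l)) in H1 by (field; lra).
    assert (0 < 1 - / l). { assert (/ l <= / 2) by (apply Rinv_le_contravar; lra). lra. }
    apply Rinv_le_contravar in H1; [|apply Rinv_0_lt_compat; lra]. rewrite Rinv_inv in H1. lra.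
  - pose proof (exp_ineq1_le (- / l)). lra. Qed.

Definition Fk (K m : nat) : R := INR (fact K) / INR (fact (K - m)).

Lemma Fk_bounds K m : (m <= K)%nat -> INR (K - m) ^ m <= Fk K m <= INR K ^ m.
Proof.
  induction m; intros Hm.
  - unfold Fk. rewrite Nat.sub_0_r. simpl. pose proof (INR_fact_neq_0 K). split; right; field; auto.
  - assert (E : Fk K (S m) = Fk K m * INR (K - m)).
    { unfold Fk. replace (K - m)%nat with (S (K - S m)) at 1 by lia.
      replace (fact (S (K - S m))) with (S (K - S m) * fact (K - S m))%nat by reflexivity.
      rewrite mult_INR. replace (INR (S (K - S m))) with (INR (K - m)) by (f_equal; lia).
      pose proof (INR_fact_neq_0 (K - S m)). assert (INR (K - m) <> 0) by (apply not_0_INR; lia). field; auto. }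
    rewrite E. destruct (IHm ltac:(lia)) as [H1 H2].
    assert (INR (K - S m) <= INR (K - m)) by (apply le_INR; lia).
    assert (INR (K - m) <= INR K) by (apply le_INR; lia).
    pose proof (pos_INR (K - S m)). pose proof (pos_INR (K - m)).
    assert (INR (K - S m) ^ m <= INR (K - m) ^ m) by (apply pow_incr; lra).
    pose proof (pow_le (INR (K - S m)) m ltac:(lra)).
    pose proof (pow_le (INR (K - m)) m ltac:(lra)).
    simpl pow. split.
    + rewrite Rmult_comm. apply Rmult_le_compat; lra.
    + rewrite (Rmult_comm (INR K)). apply Rmult_le_compat; lra. Qed.

Lemma C_Fk K m : C K m = Fk K m / INR (fact m).
Proof. unfold C, Fk. pose proof (INR_fact_neq_0 m). pose proof (INR_fact_neq_0 (K - m)). field. auto. Qed.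

Lemma bin_err K L m rho d : (2 <= L)%nat -> 0 < rho < 1 -> 0 < d <= rho / 4 -> INR m <= d * INR L ->
  Rabs (INR K / INR L - rho) < d ->
  Rabs (binp K L m - poisson rho m) <= (2 * INR m * 2 ^ m + 2) * d + 2 / (INR L - 1).
Proof.
  intros HL Hr Hd Hm Hx. set (l := INR L) in *. assert (Hl : 2 <= l) by (unfold l; apply (le_INR 2); auto).
  set (x := INR K / l) in *.
  assert (HK : INR K = x * l) by (unfold x; field; lra).
  assert (Hxb : rho - d < x < rho + d) by (apply Rabs_def2 in Hx; lra).
  assert (HmK : (m <= K)%nat).
  { apply INR_le. rewrite HK. assert (3 * d <= rho - d) by lra. pose proof (pos_INR m). nra. }
  unfold binp. destruct (Nat.leb_spec m K); [|lia]. fold l.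
  set (u := Fk K m * (/ l) ^ m). set (q := (1 - / l) ^ (K - m)).
  assert (E : C K m * (/ l) ^ m * q = u * q / INR (fact m)) by (unfold u; rewrite C_Fk; field; apply INR_fact_neq_0).
  rewrite E. unfold poisson.
  destruct (Fk_bounds K m HmK) as [F1 F2].
  assert (U1 : (rho - 2 * d) ^ m <= u).
  { unfold u. apply Rle_trans with ((INR (K - m) * / l) ^ m).
    - apply pow_incr. rewrite minus_INR by auto. split; [lra|].
      apply (Rmult_le_reg_r l); [lra|]. rewrite Rmult_assoc, Rinv_l, Rmult_1_r by lra. rewrite HK. nra.
    - rewrite Rpow_mult_distr. apply Rmult_le_compat_r; auto. apply pow_le. left; apply Rinv_0_lt_compat; lra. }
  assert (U2 : u <= (rho + d) ^ m).
  { unfold u. apply Rle_trans with (INR K ^ m * (/ l) ^ m).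
    - apply Rmult_le_compat_r; auto. apply pow_le. left; apply Rinv_0_lt_compat; lra.
    - rewrite <- Rpow_mult_distr. apply pow_incr. split. apply Rmult_le_pos; [apply pos_INR|left; apply Rinv_0_lt_compat; lra].
      change (INR K * / l) with x. lra. }
  assert (Uerr : Rabs (u - rho ^ m) <= 2 * INR m * 2 ^ m * d).
  { pose proof (pow_lip 2 (rho + d) rho m ltac:(lra) ltac:(lra) ltac:(lra)) as P1.
    pose proof (pow_lip 2 rho (rho - 2 * d) m ltac:(lra) ltac:(lra) ltac:(lra)) as P2.
    replace (rho + d - rho) with d in P1 by ring. replace (rho - (rho - 2 * d)) with (2 * d) in P2 by ring.
    rewrite (Rabs_right d) in P1 by lra. rewrite (Rabs_right (2 * d)) in P2 by lra.
    apply abs_inv in P1. apply abs_inv in P2. pose proof (pos_INR m). pose proof (pow_le 2 m ltac:(lra)).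
    assert (0 <= INR m * 2 ^ m * d) by (apply Rmult_le_pos; [apply Rmult_le_pos|]; lra).
    apply Rabs_le. split; lra. }
  set (n := INR (K - m)).
  assert (Hn : n = x * l - INR m) by (unfold n; rewrite minus_INR, HK; auto).
  assert (Hnpos : 0 <= n) by (apply pos_INR).
  destruct (one_minus_bounds l Hl) as [B1 B2].
  assert (Q1 : exp (- (n / (l - 1))) <= q).
  { unfold q. replace (- (n / (l - 1))) with (INR (K - m) * - / (l - 1)) by (unfold n, Rdiv; ring).
    rewrite <- exp_pow. apply pow_incr. split; [left; apply exp_pos|auto]. }
  assert (Q2 : q <= exp (- (n / l))).
  { unfold q. replace (- (n / l)) with (INR (K - m) * - / l) by (unfold n, Rdiv; ring).
    rewrite <- exp_pow. apply pow_incr. split; [|auto].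
    assert (/ l <= / 2) by (apply Rinv_le_contravar; lra). lra. }
  assert (Hn1 : Rabs (n / l - rho) <= 2 * d).
  { rewrite Hn. replace ((x * l - INR m) / l - rho) with ((x - rho) - INR m / l) by (field; lra).
    assert (INR m / l <= d) by (apply (Rmult_le_reg_r l); [lra|]; unfold Rdiv; rewrite Rmult_assoc, Rinv_l, Rmult_1_r by lra; lra).
    pose proof (pos_INR m). assert (0 <= INR m / l) by (apply Rmult_le_pos; [lra|left; apply Rinv_0_lt_compat; lra]).
    apply Rabs_le. apply Rabs_def2 in Hx. split; lra. }
  assert (Hn2 : Rabs (n / (l - 1) - rho) <= 2 * d + 2 / (l - 1)).
  { replace (n / (l - 1) - rho) with ((n / l - rho) + (n / l) / (l - 1)) by (field; lra).
    assert (0 <= n / l / (l - 1) <= 2 / (l - 1)).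
    { split. apply Rmult_le_pos; [apply Rmult_le_pos|]; try lra; left; apply Rinv_0_lt_compat; lra.
      unfold Rdiv. apply Rmult_le_compat_r. left; apply Rinv_0_lt_compat; lra.
      apply abs_inv in Hn1. lra. }
    eapply Rle_trans; [apply Rabs_triang|]. rewrite (Rabs_right (n / l / (l - 1))) by lra. lra. }
  assert (Qerr : Rabs (q - exp (- rho)) <= 2 * d + 2 / (l - 1)).
  { assert (0 <= n / l) by (apply Rmult_le_pos; [lra|left; apply Rinv_0_lt_compat; lra]).
    assert (0 <= n / (l - 1)) by (apply Rmult_le_pos; [lra|left; apply Rinv_0_lt_compat; lra]).
    pose proof (exp_lip (- (n / l)) (- rho) ltac:(lra) ltac:(lra)) as E1.
    pose proof (exp_lip (- (n / (l - 1))) (- rho) ltac:(lra) ltac:(lra)) as E2.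
    replace (- (n / l) - - rho) with (- (n / l - rho)) in E1 by ring.
    replace (- (n / (l - 1)) - - rho) with (- (n / (l - 1) - rho)) in E2 by ring.
    rewrite Rabs_Ropp in E1, E2. apply abs_inv in E1. apply abs_inv in E2.
    assert (0 <= 2 / (l - 1)) by (apply Rmult_le_pos; [lra|left; apply Rinv_0_lt_compat; lra]).
    apply Rabs_le. split; lra. all: fail. }
  assert (Hq : 0 <= q <= 1).
  { split. eapply Rle_trans; [|apply Q1]. left; apply exp_pos.
    eapply Rle_trans; [apply Q2|]. rewrite <- exp_0. apply exp_le.
    assert (0 <= n / l) by (apply Rmult_le_pos; [lra|left; apply Rinv_0_lt_compat; lra]). lra. }
  assert (Fm : 1 <= INR (fact m)) by (apply (le_INR 1); pose proof (lt_O_fact m); lia).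
  assert (Hrm : 0 <= rho ^ m <= 1) by (split; [apply pow_le; lra| rewrite <- (pow1 m); apply pow_incr; lra]).
  replace (u * q / INR (fact m) - exp (- rho) * rho ^ m / INR (fact m))
    with (((u - rho ^ m) * q + rho ^ m * (q - exp (- rho))) / INR (fact m)) by (field; lra).
  unfold Rdiv. rewrite Rabs_mult, (Rabs_right (/ INR (fact m))) by (left; apply Rinv_0_lt_compat; lra).
  assert (/ INR (fact m) <= 1) by (rewrite <- Rinv_1; apply Rinv_le_contravar; lra).
  assert (0 < / INR (fact m)) by (apply Rinv_0_lt_compat; lra).
  assert (A1 : Rabs ((u - rho ^ m) * q + rho ^ m * (q - exp (- rho))) <= 2 * INR m * 2 ^ m * d + (2 * d + 2 / (l - 1))).
  { eapply Rle_trans; [apply Rabs_triang|]. rewrite !Rabs_mult, (Rabs_right q), (Rabs_right (rho ^ m)) by lra.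
    pose proof (Rabs_pos (u - rho ^ m)). pose proof (Rabs_pos (q - exp (- rho))).
    assert (Rabs (u - rho ^ m) * q <= 2 * INR m * 2 ^ m * d * 1) by (apply Rmult_le_compat; lra).
    assert (rho ^ m * Rabs (q - exp (- rho)) <= 1 * (2 * d + 2 / (l - 1))) by (apply Rmult_le_compat; lra). lra. }
  pose proof (Rabs_pos ((u - rho ^ m) * q + rho ^ m * (q - exp (- rho)))).
  assert (Rabs ((u - rho ^ m) * q + rho ^ m * (q - exp (- rho))) * / INR (fact m) <= Rabs ((u - rho ^ m) * q + rho ^ m * (q - exp (- rho))) * 1)
    by (apply Rmult_le_compat_l; lra). unfold Rdiv in *. lra.
Qed.

Lemma nat_big x : exists n : nat, x < INR n.
Proof. destruct (archimed x) as [H1 _]. exists (Z.to_nat (up x)).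
  destruct (Z_lt_le_dec (up x) 0).
  - pose proof (pos_INR (Z.to_nat (up x))). assert (IZR (up x) < 0) by (apply IZR_lt; auto). lra.
  - rewrite INR_IZR_INZ, Z2Nat.id by auto. auto. Qed.

Lemma small_zero a : (forall e, 0 < e -> Rabs a < e) -> a = 0.
Proof. intros H. destruct (Req_dec a 0); auto. exfalso. specialize (H (Rabs a) (Rabs_pos_lt a H0)). lra. Qed.

Lemma Ex_bound01 L N nu g : rbb_stationary L N nu -> (forall x, In x (configs L N) -> 0 <= g x <= 1) -> 0 <= Ex L N nu g <= 1.
Proof. intros Hs Hg. destruct Hs as [P1 [P2 P3]]. unfold Ex. split.
  - apply SS_nonneg. intros x Hx. apply Rmult_le_pos; [apply P1|apply Hg]; auto.
  - assert (SS (fun x => nu x * g x) (configs L N) <= SS nu (configs L N)); [|unfold SS in *; lra].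
    apply SS_le. intros x Hx. specialize (P1 x Hx). specialize (Hg x Hx). nra. Qed.

Lemma Ex_abs L N nu g h : rbb_stationary L N nu -> (forall x, In x (configs L N) -> Rabs (g x) <= h x) -> Rabs (Ex L N nu g) <= Ex L N nu h.
Proof. intros [P1 _] Hg. unfold Ex. eapply Rle_trans; [apply SS_abs|]. apply SS_le. intros x Hx.
  rewrite Rabs_mult, Rabs_right by (apply Rle_ge, P1; auto). apply Rmult_le_compat_l; auto. Qed.

Lemma eqi_01 a b : 0 <= eqi a b <= 1.
Proof. unfold eqi; destruct (Nat.eqb a b); lra. Qed.
Lemma wj_01 j x : 0 <= wj j x <= 1.
Proof. unfold wj. destruct (ind_pos_cases (nth j x 0%nat)) as [[-> _]|[-> _]]; simpl; lra. Qed.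

Lemma marg1_01 L N nu a : (2 <= L)%nat -> rbb_stationary L N nu -> 0 <= marginal L N nu [a] <= 1.
Proof. intros HL Hs. rewrite marg1 by lia. apply Ex_bound01; auto. intros; apply eqi_01. Qed.

Section Main.
Variables (r : R) (p q : nat) (nu : nat -> list nat -> R) (mu : nat -> R).
Hypothesis hr : 0 < r.
Hypothesis hq : (0 < q)%nat.
Hypothesis hpq : r = INR p / INR q.
Hypothesis hnu : forall L N : nat, (1 <= L)%nat -> INR N = r * INR L -> rbb_stationary L N (nu L).
Hypothesis hmu : prob_measure_nat mu.
Hypothesis hchaos : forall k : list nat, forall eps : R, 0 < eps ->
     exists L0 : nat, forall L N : nat, (L0 <= L)%nat -> (1 <= L)%nat ->
       INR N = r * INR L ->
       Rabs (marginal L N (nu L) k - prod_measure mu k) < eps.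

Definition V (L N : nat) : Prop := (2 <= L)%nat /\ INR N = r * INR L.

Lemma freq L0 : exists L N, (L0 <= L)%nat /\ V L N.
Proof. exists (q * (L0 + 2))%nat, (p * (L0 + 2))%nat. split; [nia|]. split; [nia|].
  rewrite !mult_INR, hpq. assert (0 < INR q) by (apply lt_0_INR; auto). field. lra. Qed.

Lemma stat L N : V L N -> rbb_stationary L N (nu L).
Proof. intros [H1 H2]. apply hnu; auto; lia. Qed.

Lemma ratio L N : V L N -> INR N / INR L = r.
Proof. intros [H1 H2]. rewrite H2. assert (0 < INR L) by (apply lt_0_INR; lia). field. lra. Qed.

Lemma chaos_ev k e : 0 < e -> exists L0, forall L N, (L0 <= L)%nat -> V L N -> Rabs (marginal L N (nu L) k - prod_measure mu k) < e.
Proof. intros He. destruct (hchaos k e He) as [L0 H]. exists L0. intros L N HL [H1 H2]. apply H; auto; lia. Qed.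

Lemma chaos_all n e : 0 < e -> exists L0, forall L N, (L0 <= L)%nat -> V L N ->
  forall i, (i <= n)%nat -> Rabs (marginal L N (nu L) [i] - mu i) < e.
Proof. intros He. induction n.
  - destruct (chaos_ev [0%nat] e He) as [L0 H]. exists L0. intros L N HL HV i Hi.
    replace i with 0%nat by lia. specialize (H L N HL HV). unfold prod_measure, Rprod_list in H. simpl in H.
    rewrite Rmult_1_r in H. auto.
  - destruct IHn as [L1 H1]. destruct (chaos_ev [S n] e He) as [L2 H2]. exists (Nat.max L1 L2).
    intros L N HL HV i Hi. destruct (Nat.eq_dec i (S n)) as [->|Hne].
    + specialize (H2 L N ltac:(lia) HV). unfold prod_measure, Rprod_list in H2. simpl in H2. rewrite Rmult_1_r in H2. auto.
    + apply H1; auto; lia. Qed.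

Lemma ev_large c : exists L0 : nat, forall L, (L0 <= L)%nat -> c < INR L.
Proof. destruct (nat_big c) as [n Hn]. exists n. intros L HL. apply le_INR in HL. lra. Qed.

Definition rho0 := 1 - mu 0%nat.

Lemma mu0_01 : 0 <= mu 0%nat <= 1.
Proof. destruct hmu as [Hp _]. split; auto.
  destruct (Rle_dec (mu 0%nat) 1); auto. exfalso. set (e := mu 0%nat - 1).
  destruct (chaos_all 0 e ltac:(unfold e; lra)) as [L0 H]. destruct (freq L0) as [L [N [HL HV]]].
  specialize (H L N HL HV 0%nat (le_n 0)). pose proof (marg1_01 L N (nu L) 0 (proj1 HV) (stat L N HV)).
  apply Rabs_def2 in H. unfold e in H. lra. Qed.

Lemma quad_rho : - 2 * r + 2 * rho0 + 2 * r * rho0 - rho0 ^ 2 = 0.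
Proof.
  apply small_zero. intros e He.
  set (eta := e / (4 * (2 * r + 5))).
  assert (Heta : 0 < eta) by (unfold eta; apply Rdiv_lt_0_compat; lra).
  destruct (chaos_all 0 eta Heta) as [L1 H1].
  destruct (chaos_ev [0%nat; 0%nat] eta Heta) as [L2 H2].
  destruct (ev_large (6 / e)) as [L3 H3].
  destruct (freq (Nat.max L1 (Nat.max L2 L3))) as [L [N [HL HV]]].
  specialize (H1 L N ltac:(lia) HV 0%nat (le_n 0)). specialize (H2 L N ltac:(lia) HV). specialize (H3 L ltac:(lia)).
  pose proof (stat L N HV) as Hs. destruct HV as [HL2 HN].
  pose proof (quad_id L N (nu L) HL2 Hs) as Q. rewrite (ratio L N (conj HL2 HN)) in Q.
  rewrite (Aw_marg L N (nu L) HL2 Hs), (Bw_marg L N (nu L) HL2 Hs) in Q.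
  unfold prod_measure, Rprod_list in H2. simpl in H2.
  pose proof (marg1_01 L N (nu L) 0 HL2 Hs) as M0.
  assert (HB : 0 <= Bw L N (nu L) <= 1) by (apply Ex_bound01; auto; intros; pose proof (wj_01 0 x); pose proof (wj_01 1 x); split; nra).
  rewrite (Bw_marg L N (nu L) HL2 Hs) in HB.
  set (m0 := marginal L N (nu L) [0%nat]) in *. set (m00 := marginal L N (nu L) [0%nat; 0%nat]) in *.
  set (l := INR L) in *. assert (Hl : 2 <= l) by (unfold l; apply (le_INR 2); auto).
  assert (Hel : 6 / e < l) by auto.
  assert (Hil : / l < e / 6). { replace (e / 6) with (/ (6 / e)) by (field; lra). apply Rinv_lt_contravar; auto.
    apply Rmult_lt_0_compat; [apply Rdiv_lt_0_compat; lra|lra]. }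
  apply Rabs_def2 in H1. apply Rabs_def2 in H2. unfold rho0.
  set (mu0 := mu 0%nat) in *. pose proof mu0_01 as Hmu0. fold mu0 in Hmu0.
  set (e1 := m0 - mu0) in *. set (e2 := m00 - mu0 * (mu0 * 1)) in *.
  assert (Hexp : - 2 * r + 2 * (1 - mu0) + 2 * r * (1 - mu0) - (1 - mu0) ^ 2 =
     2 * e1 * (1 + r) - 2 * e1 + e2 + (2 * (1 - m0) - (1 - 2 * m0 + m00)) * / l).
  { unfold e1, e2. replace (- 2 * r + 2 * (1 - mu0) + 2 * r * (1 - mu0) - (1 - mu0) ^ 2) with
      (- 2 * r + 2 * (1 - mu0) + 2 * r * (1 - mu0) - (1 - mu0) ^ 2 - (r * -2 + 2 * (1 - m0) + 2 * r * (1 - m0) - 2 * (1 - m0) / l - (l - 1) / l * (1 - 2 * m0 + m00))) by lra.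
    field. lra. }
  rewrite Hexp. assert (Hlpos : 0 < / l) by (apply Rinv_0_lt_compat; lra).
  assert (Hc : Rabs ((2 * (1 - m0) - (1 - 2 * m0 + m00)) * / l) <= 3 * / l).
  { rewrite Rabs_mult, (Rabs_right (/ l)) by lra. apply Rmult_le_compat_r; [lra|]. apply Rabs_le. lra. }
  apply abs_inv in Hc.
  assert (eta * (4 * (2 * r + 5)) = e) by (unfold eta; field; lra).
  apply Rabs_def1; nra.
Qed.

Lemma rho0_eq : rho0 = rho_of r /\ 0 < rho0 < 1.
Proof.
  pose proof quad_rho as Q. pose proof mu0_01 as M. unfold rho0 in *.
  set (x := 1 - mu 0%nat) in *. assert (Hx : 0 <= x <= 1) by (unfold x; lra). clearbody x.
  assert (Hsq : (1 + r - x) ^ 2 = 1 + r ^ 2) by nra.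
  assert (Hs : sqrt (1 + r ^ 2) = 1 + r - x) by (rewrite <- Hsq; apply sqrt_pow2; lra).
  split. unfold rho_of. rewrite Hs. ring.
  split.
  - destruct (Rle_lt_or_eq_dec 0 x (proj1 Hx)) as [?|E]; auto. rewrite <- E in Q. nra.
  - destruct (Rle_lt_or_eq_dec x 1 (proj2 Hx)) as [?|E]; auto. rewrite E in Q. nra.
Qed.

Lemma poi_01 rho m : 0 < rho < 1 -> 0 <= poisson rho m <= 1.
Proof. intros H. unfold poisson. pose proof (exp_pos (- rho)).
  assert (exp (- rho) <= 1) by (rewrite <- exp_0; apply exp_le; lra).
  assert (0 <= rho ^ m <= 1) by (split; [apply pow_le; lra| rewrite <- (pow1 m); apply pow_incr; lra]).
  assert (1 <= INR (fact m)) by (apply (le_INR 1); pose proof (lt_O_fact m); lia).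
  assert (0 < / INR (fact m) <= 1) by (split; [apply Rinv_0_lt_compat; lra| rewrite <- Rinv_1; apply Rinv_le_contravar; lra]).
  unfold Rdiv. split. apply Rmult_le_pos; [apply Rmult_le_pos|]; lra.
  assert (exp (- rho) * rho ^ m <= 1 * 1) by (apply Rmult_le_compat; lra).
  assert (exp (- rho) * rho ^ m * / INR (fact m) <= 1 * 1) by (apply Rmult_le_compat; try lra; apply Rmult_le_pos; lra).
  lra. Qed.

Lemma binp_le1 K L m : (1 <= L)%nat -> binp K L m <= 1.
Proof. intros HL. destruct (Nat.le_gt_cases m K).
  - rewrite <- (bin_m0 K L). apply (SS_in_le (binp K L)). intros; apply binp_nonneg; auto. apply in_seq; lia.
  - rewrite binp_zero by lia. lra. Qed.

Definition Cm (m : nat) : R := 2 * INR m * 2 ^ m + 2.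

Lemma Cm_mono m n : (m <= n)%nat -> Cm m <= Cm n.
Proof. intros H. unfold Cm. assert (INR m <= INR n) by (apply le_INR; auto).
  assert (2 ^ m <= 2 ^ n) by (apply Rle_pow; lra || auto). pose proof (pos_INR m). pose proof (pow_le 2 m ltac:(lra)).
  assert (INR m * 2 ^ m <= INR n * 2 ^ n) by (apply Rmult_le_compat; lra). lra. Qed.

Lemma E_err L N i m rho d : V L N -> 0 < rho < 1 -> 0 < d <= rho / 4 -> INR m <= d * INR L ->
  Rabs (Ex L N (nu L) (fun x => eqi (h0 x) i * binp (Kocc x) L m) - marginal L N (nu L) [i] * poisson rho m)
  <= Cm m * d + 2 / (INR L - 1) + Ex L N (nu L) (fun x => (KK x / INR L - rho) ^ 2) / d ^ 2.
Proof.
  intros HV Hr Hd Hm. pose proof (stat L N HV) as Hs. destruct HV as [HL HN].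
  assert (Hl : 2 <= INR L) by (apply (le_INR 2); auto).
  rewrite marg1 by lia.
  replace (Ex L N (nu L) (fun x => eqi (h0 x) i * binp (Kocc x) L m) - Ex L N (nu L) (fun x => eqi (h0 x) i) * poisson rho m)
    with (Ex L N (nu L) (fun x => eqi (h0 x) i * (binp (Kocc x) L m - poisson rho m))).
  2:{ rewrite Rmult_comm, <- Ex_scal. unfold Ex. rewrite <- SS_minus. apply SS_ext; intros; ring. }
  assert (Hc : 0 <= Cm m * d + 2 / (INR L - 1)).
  { unfold Cm. pose proof (pos_INR m). pose proof (pow_le 2 m ltac:(lra)).
    assert (0 <= 2 / (INR L - 1)) by (apply Rmult_le_pos; [lra|left; apply Rinv_0_lt_compat; lra]).
    assert (0 <= (2 * INR m * 2 ^ m + 2) * d) by (apply Rmult_le_pos; [|lra]; pose proof (Rmult_le_pos _ _ H H0); lra). lra. }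
  eapply Rle_trans.
  - apply (Ex_abs L N (nu L) _ (fun x => (Cm m * d + 2 / (INR L - 1)) + / d ^ 2 * (KK x / INR L - rho) ^ 2)); auto.
    intros x Hx. rewrite Rabs_mult, (Rabs_right (eqi _ _)) by (apply Rle_ge, eqi_01).
    assert (B1 : Rabs (binp (Kocc x) L m - poisson rho m) <= 1).
    { pose proof (binp_nonneg (Kocc x) L m ltac:(lia)). pose proof (binp_le1 (Kocc x) L m ltac:(lia)).
      pose proof (poi_01 rho m Hr). apply Rabs_le. lra. }
    assert (B2 : Rabs (binp (Kocc x) L m - poisson rho m) <= Cm m * d + 2 / (INR L - 1) + / d ^ 2 * (KK x / INR L - rho) ^ 2).
    { assert (0 <= / d ^ 2 * (KK x / INR L - rho) ^ 2) by (apply Rmult_le_pos; [left; apply Rinv_0_lt_compat, pow_lt; lra| apply pow2_ge_0]).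
      destruct (Rlt_dec (Rabs (KK x / INR L - rho)) d) as [Hlt|Hge].
      - pose proof (bin_err (Kocc x) L m rho d HL Hr Hd Hm Hlt). unfold Cm. lra.
      - assert (Hd2 : d ^ 2 <= (KK x / INR L - rho) ^ 2).
        { apply Rnot_lt_le in Hge. destruct (Rcase_abs (KK x / INR L - rho)) as [Hn|Hn];
            [rewrite Rabs_left in Hge by lra| rewrite Rabs_right in Hge by lra]; nra. }
        assert (1 <= / d ^ 2 * (KK x / INR L - rho) ^ 2).
        { assert (0 < d ^ 2) by (apply pow_lt; lra).
          replace 1 with (/ d ^ 2 * d ^ 2) by (field; lra). apply Rmult_le_compat_l; [left; apply Rinv_0_lt_compat; lra|lra]. }
        lra. }
    pose proof (eqi_01 (h0 x) i). pose proof (Rabs_pos (binp (Kocc x) L m - poisson rho m)).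
    assert (eqi (h0 x) i * Rabs (binp (Kocc x) L m - poisson rho m) <= 1 * Rabs (binp (Kocc x) L m - poisson rho m)) by (apply Rmult_le_compat_r; lra).
    lra.
  - rewrite Ex_plus, Ex_const, Ex_scal by auto. right. unfold Rdiv. ring.
Qed.

Lemma conc_bound L N eta : V L N -> Rabs (marginal L N (nu L) [0%nat] - mu 0%nat) < eta ->
  Rabs (marginal L N (nu L) [0%nat; 0%nat] - mu 0%nat * (mu 0%nat * 1)) < eta ->
  Ex L N (nu L) (fun x => (KK x / INR L - rho0) ^ 2) <= / INR L + 5 * eta.
Proof.
  intros HV H1 H2. pose proof (stat L N HV) as Hs. destruct HV as [HL HN].
  rewrite conc by auto. rewrite (Aw_marg L N (nu L) HL Hs), (Bw_marg L N (nu L) HL Hs).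
  pose proof (marg1_01 L N (nu L) 0 HL Hs) as M0.
  assert (HB : 0 <= Bw L N (nu L) <= 1) by (apply Ex_bound01; auto; intros; pose proof (wj_01 0 x); pose proof (wj_01 1 x); split; nra).
  rewrite (Bw_marg L N (nu L) HL Hs) in HB.
  set (m0 := marginal L N (nu L) [0%nat]) in *. set (m00 := marginal L N (nu L) [0%nat; 0%nat]) in *.
  assert (Hl : 2 <= INR L) by (apply (le_INR 2); auto). set (l := INR L) in *.
  apply Rabs_def2 in H1. apply Rabs_def2 in H2. pose proof mu0_01. unfold rho0.
  set (mu0 := mu 0%nat) in *.
  replace ((1 - m0 + (l - 1) * (1 - 2 * m0 + m00)) / l - 2 * (1 - mu0) * (1 - m0) + (1 - mu0) ^ 2)
    with (((1 - m0) - (1 - 2 * m0 + m00)) * / l + (- 2 * (m0 - mu0) + (m00 - mu0 * (mu0 * 1)) + 2 * (1 - mu0) * (m0 - mu0)))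
    by (field; lra).
  assert (0 < / l) by (apply Rinv_0_lt_compat; lra).
  assert (((1 - m0) - (1 - 2 * m0 + m00)) * / l <= 1 * / l) by (apply Rmult_le_compat_r; lra).
  assert (2 * (1 - mu0) * (m0 - mu0) <= 2 * eta).
  { destruct (Rle_dec 0 (m0 - mu0)); [|nra]. assert ((1 - mu0) * (m0 - mu0) <= 1 * eta) by (apply Rmult_le_compat; lra). lra. }
  lra.
Qed.

Lemma md1_main j : mu j = sum_f_R0 (fun i => mu i * poisson rho0 (j + ind_pos i - i)) (S j).
Proof.
  destruct rho0_eq as [_ Hr]. set (rho := rho0) in *.
  apply Rminus_diag_uniq. apply small_zero. intros e He.
  set (J := INR (S (S j))). assert (HJ : 2 <= J) by (unfold J; apply (le_INR 2); lia).
  set (Cj := Cm (S j)). assert (HC : 2 <= Cj).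
  { unfold Cj, Cm. pose proof (pos_INR (S j)). pose proof (pow_le 2 (S j) ltac:(lra)). nra. }
  set (d := Rmin (rho / 4) (e / (4 * Cj * J))).
  assert (Hd : 0 < d <= rho / 4) by (unfold d; split; [apply Rmin_pos; [lra|apply Rdiv_lt_0_compat; nra]|apply Rmin_l]).
  assert (HdC : d <= e / (4 * Cj * J)) by apply Rmin_r.
  assert (Hd1 : d ^ 2 <= 1) by nra. assert (Hd2 : 0 < d ^ 2) by (apply pow_lt; lra).
  set (eta := e * d ^ 2 / (40 * J)).
  assert (Heta : 0 < eta) by (unfold eta; apply Rdiv_lt_0_compat; nra).
  destruct (chaos_all (S j) eta Heta) as [L1 H1].
  destruct (chaos_ev [0%nat; 0%nat] eta Heta) as [L2 H2].
  destruct (ev_large (12 * J / (e * d ^ 2) + 1)) as [L3 H3].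
  destruct (ev_large (INR (S j) / d)) as [L4 H4].
  destruct (freq (Nat.max (Nat.max L1 L2) (Nat.max L3 L4))) as [L [N [HLL HV]]].
  specialize (H1 L N ltac:(lia) HV). specialize (H2 L N ltac:(lia) HV).
  specialize (H3 L ltac:(lia)). specialize (H4 L ltac:(lia)).
  pose proof (stat L N HV) as Hs. pose proof HV as [HL HN].
  set (l := INR L) in *. assert (Hl : 2 <= l) by (unfold l; apply (le_INR 2); auto).
  assert (Hconc := conc_bound L N eta HV (H1 0%nat ltac:(lia)) H2). fold l rho in Hconc.
  set (cc := Ex L N (nu L) (fun x => (KK x / l - rho) ^ 2)) in *.
  rewrite <- SS_seq_sum.
  pose proof (md1_fin L N (nu L) HL Hs j) as Hm.
  set (Ei := fun i => Ex L N (nu L) (fun x => eqi (h0 x) i * binp (Kocc x) L (j + ind_pos i - i))) in *.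
  set (mi := fun i => marginal L N (nu L) [i]).
  set (pi := fun i => poisson rho (j + ind_pos i - i)).
  assert (Dec : mu j - SS (fun i => mu i * pi i) (seq 0 (S (S j))) =
     (mu j - mi j) + SS (fun i => Ei i - mi i * pi i) (seq 0 (S (S j))) + SS (fun i => (mi i - mu i) * pi i) (seq 0 (S (S j)))).
  { rewrite (SS_minus Ei (fun i => mi i * pi i)).
    rewrite (SS_ext (fun i => (mi i - mu i) * pi i) (fun i => mi i * pi i - mu i * pi i)) by (intros; ring).
    rewrite (SS_minus (fun i => mi i * pi i) (fun i => mu i * pi i)).
    assert (mi j = SS Ei (seq 0 (S (S j)))) by (unfold mi; rewrite Hm; reflexivity). lra. }
  change (Rabs (mu j - SS (fun i => mu i * pi i) (seq 0 (S (S j)))) < e). rewrite Dec.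
  assert (T1 : Rabs (mu j - mi j) < eta) by (unfold mi; rewrite Rabs_minus_sym; apply H1; lia).
  assert (Epos : 0 < / d ^ 2) by (apply Rinv_0_lt_compat; lra).
  assert (T2 : Rabs (SS (fun i => Ei i - mi i * pi i) (seq 0 (S (S j)))) <= J * (Cj * d + 2 / (l - 1) + (/ l + 5 * eta) / d ^ 2)).
  { eapply Rle_trans; [apply SS_abs|]. unfold J. match goal with |- _ <= ?A * ?B => replace (A * B) with (SS (fun _ => B) (seq 0 (S (S j)))) by (rewrite SS_const, length_seq; reflexivity) end.
    apply SS_le. intros i Hi. apply in_seq in Hi.
    assert (Hmi : (j + ind_pos i - i <= S j)%nat) by (pose proof (ind_pos_le1 i); lia).
    eapply Rle_trans; [apply (E_err L N i (j + ind_pos i - i) rho d HV Hr Hd)|].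
    - apply Rle_trans with (INR (S j)); [apply le_INR; auto|]. apply Rlt_le. fold l.
      assert (INR (S j) = INR (S j) / d * d) by (field; lra). nra.
    - fold l. fold cc. pose proof (Cm_mono _ _ Hmi). fold Cj in H.
      assert (Cm (j + ind_pos i - i) * d <= Cj * d) by (apply Rmult_le_compat_r; lra).
      assert (cc / d ^ 2 <= (/ l + 5 * eta) / d ^ 2) by (apply Rmult_le_compat_r; lra). lra. }
  assert (T3 : Rabs (SS (fun i => (mi i - mu i) * pi i) (seq 0 (S (S j)))) <= J * eta).
  { eapply Rle_trans; [apply SS_abs|]. unfold J. match goal with |- _ <= ?A * ?B => replace (A * B) with (SS (fun _ => B) (seq 0 (S (S j)))) by (rewrite SS_const, length_seq; reflexivity) end.
    apply SS_le. intros i Hi. apply in_seq in Hi. rewrite Rabs_mult.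
    pose proof (poi_01 rho (j + ind_pos i - i) Hr) as P. fold (pi i) in P. rewrite (Rabs_right (pi i)) by lra.
    assert (Rabs (mi i - mu i) <= eta) by (left; apply H1; lia).
    assert (Rabs (mi i - mu i) * pi i <= eta * 1) by (apply Rmult_le_compat; try lra; apply Rabs_pos). lra. }
  assert (A1 : J * (Cj * d) <= e / 4).
  { assert (Cj * J * d <= Cj * J * (e / (4 * Cj * J))) by (apply Rmult_le_compat_l; nra).
    replace (Cj * J * (e / (4 * Cj * J))) with (e / 4) in H by (field; lra). lra. }
  assert (Hl1 : 12 * J / (e * d ^ 2) < l - 1) by lra.
  assert (A2 : J * (2 / (l - 1) + / l / d ^ 2) < e / 4).
  { assert (0 < l - 1) by lra.
    assert (/ l <= / (l - 1)) by (apply Rinv_le_contravar; lra).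
    assert (2 / (l - 1) <= 2 / (l - 1) / d ^ 2).
    { unfold Rdiv. rewrite Rmult_assoc. apply Rmult_le_compat_l; [lra|].
      replace (/ (l - 1)) with (/ (l - 1) * 1) at 1 by ring. apply Rmult_le_compat_l.
      left; apply Rinv_0_lt_compat; lra. rewrite <- Rinv_1. apply Rinv_le_contravar; lra. }
    assert (/ l / d ^ 2 <= / (l - 1) / d ^ 2) by (apply Rmult_le_compat_r; lra).
    assert (3 * J / ((l - 1) * d ^ 2) < e / 4).
    { assert (12 * J < (l - 1) * (e * d ^ 2)).
      { assert (12 * J = 12 * J / (e * d ^ 2) * (e * d ^ 2)) by (field; nra).
        assert (Hp : 0 < e * d ^ 2) by nra. pose proof (Rmult_lt_compat_r (e * d ^ 2) _ _ Hp Hl1). lra. }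
      assert (HX : 0 < (l - 1) * d ^ 2) by nra.
      assert (3 * J < e / 4 * ((l - 1) * d ^ 2)) by nra.
      assert (3 * J * / ((l - 1) * d ^ 2) < e / 4 * ((l - 1) * d ^ 2) * / ((l - 1) * d ^ 2)).
      { apply Rmult_lt_compat_r; auto. apply Rinv_0_lt_compat; auto. }
      replace (e / 4 * ((l - 1) * d ^ 2) * / ((l - 1) * d ^ 2)) with (e / 4) in H9 by (field; lra).
      unfold Rdiv at 1. lra. }
    replace (3 * J / ((l - 1) * d ^ 2)) with (J * (3 * (/ (l - 1) / d ^ 2))) in H7 by (field; nra).
    assert (J * (2 / (l - 1) + / l / d ^ 2) <= J * (3 * (/ (l - 1) / d ^ 2))).
    { apply Rmult_le_compat_l; [lra|]. unfold Rdiv in *. lra. }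
    lra. }
  assert (A3 : eta + J * (5 * eta / d ^ 2) + J * eta <= 7 * e / 40).
  { assert (Hed : eta / d ^ 2 = e / (40 * J)) by (unfold eta; field; nra).
    assert (eta <= eta / d ^ 2).
    { unfold Rdiv. replace eta with (eta * 1) at 1 by ring. apply Rmult_le_compat_l; [lra|].
      rewrite <- Rinv_1. apply Rinv_le_contravar; lra. }
    assert (J * (eta / d ^ 2) = e / 40) by (rewrite Hed; field; lra).
    assert (eta <= J * (eta / d ^ 2)) by nra.
    assert (J * eta <= J * (eta / d ^ 2)) by (apply Rmult_le_compat_l; lra).
    replace (J * (5 * eta / d ^ 2)) with (5 * (J * (eta / d ^ 2))) by (field; lra). lra. }
  eapply Rle_lt_trans; [apply Rabs_triang|]. eapply Rle_lt_trans; [apply Rplus_le_compat; [apply Rabs_triang|apply T3]|].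
  replace (J * (Cj * d + 2 / (l - 1) + (/ l + 5 * eta) / d ^ 2)) with (J * (Cj * d) + J * (2 / (l - 1) + / l / d ^ 2) + J * (5 * eta / d ^ 2)) in T2 by (field; lra).
  lra.
Qed.
End Main.


Theorem mainTheorem7
  (r : R) (hr : 0 < r)
  (hrat : exists p q : nat, (0 < q)%nat /\ r = INR p / INR q)
  (nu : nat -> list nat -> R)
  (hnu : forall L N : nat, (1 <= L)%nat -> INR N = r * INR L ->
           rbb_stationary L N (nu L))
  (mu : nat -> R) (hmu : prob_measure_nat mu)
  (hchaos : forall k : list nat, forall eps : R, 0 < eps ->
     exists L0 : nat, forall L N : nat, (L0 <= L)%nat -> (1 <= L)%nat ->
       INR N = r * INR L ->
       Rabs (marginal L N (nu L) k - prod_measure mu k) < eps) :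
  md1_invariant (rho_of r) mu.
Proof.
  destruct hrat as [p [q [hq hpq]]].
  destruct (rho0_eq r p q nu mu hr hq hpq hnu hmu hchaos) as [E _].
  split; auto. intros j. rewrite <- E.
  apply (md1_main r p q nu mu hr hq hpq hnu hmu hchaos j).
Qed.
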